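(* If $s>0$ is small enough, then for every $1\le i\le n-1$ and $1\le j\le D_i$ there is a critical point $w_{i,j}\in\mathbb{C}\setminus\{0\}$ of $P_n$ (a solution of $\sum_{k=1}^{n-1}\frac{(-1)^{k-1}D_kz^{D_k}}{z^{D_k}-a_k^{D_k}}+(-1)^{n-1}d_n-\frac{(d_1-1)d_1z^{d_1}}{(d_1-1)z^{d_1}+1}=0$) such that $|w_{i,j}-\widetilde w_{i,j}|<s^{1/2}|a_i|$, where $\widetilde w_{i,j}=r_ia_ie^{\pi\mathrm{i}(2j-1)/D_i}$ and $r_i=(d_{i+1}/d_i)^{1/D_i}$.
   Context: $n\ge2$, $d_1,\dots,d_n$ positive integers with $\sum 1/d_i<1$, $d_{\max}=\max_i d_i$, $D_i=d_i+d_{i+1}$. $s>0$, $a_i\in\mathbb{C}$ with $|a_1|=(d_{\max}^2s)^{1/d_1}$, $|a_i|=s^{1/d_i}|a_{i-1}|$. $C_n=\sum_{i=1}^{n-1}\frac{(-1)^{i-1}D_ia_i^{D_i}}{1-a_i^{D_i}}$, $B_n=C_n/(1+C_n)$, $A_n=\frac{1}{1+C_n}\prod_{i=1}^{n-1}(1-a_i^{D_i})^{(-1)^i}$, $P_n(z)=A_n\frac{d_1z^{(-1)^{n-1}d_n}}{(d_1-1)z^{d_1}+1}\prod_{i=1}^{n-1}(z^{D_i}-a_i^{D_i})^{(-1)^{i-1}}+B_n$. *)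

(* Defs.v *)
From Stdlib Require Import Reals Lra Lia.
Open Scope R_scope.

Record Cx := mkC { Re : R; Im : R }.

Definition RtoC (x : R) : Cx := mkC x 0.
Definition C0 : Cx := RtoC 0.
Definition C1 : Cx := RtoC 1.
Definition Cadd (z w : Cx) : Cx := mkC (Re z + Re w) (Im z + Im w).
Definition Copp (z : Cx) : Cx := mkC (- Re z) (- Im z).
Definition Csub (z w : Cx) : Cx := Cadd z (Copp w).
Definition Cmul (z w : Cx) : Cx :=
  mkC (Re z * Re w - Im z * Im w) (Re z * Im w + Im z * Re w).
Definition Cinv (z : Cx) : Cx :=
  let r := Re z * Re z + Im z * Im z in mkC (Re z / r) (- Im z / r).
Definition Cdiv (z w : Cx) : Cx := Cmul z (Cinv w).
Fixpoint Cpow (z : Cx) (k : nat) : Cx :=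
  match k with O => C1 | S k' => Cmul z (Cpow z k') end.
Definition Cnorm (z : Cx) : R := sqrt (Re z * Re z + Im z * Im z).
Definition Cexpi (theta : R) : Cx := mkC (cos theta) (sin theta).

Fixpoint Csum1 (f : nat -> Cx) (m : nat) : Cx :=
  match m with O => C0 | S m' => Cadd (Csum1 f m') (f m) end.
Fixpoint Rsum1 (f : nat -> R) (m : nat) : R :=
  match m with O => 0 | S m' => Rsum1 f m' + f m end.
Fixpoint nmax1 (d : nat -> nat) (m : nat) : nat :=
  match m with O => O | S m' => Nat.max (nmax1 d m') (d m) end.

Definition Dd (d : nat -> nat) (i : nat) : nat := (d i + d (S i))%nat.

Definition crit_lhs (n : nat) (d : nat -> nat) (a : nat -> Cx) (z : Cx) : Cx :=
  Csub
    (Cadd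
      (Csum1 (fun k => Cdiv
                (Cmul (RtoC ((-1) ^ (k - 1) * INR (Dd d k))) (Cpow z (Dd d k)))
                (Csub (Cpow z (Dd d k)) (Cpow (a k) (Dd d k)))) (n - 1))
      (RtoC ((-1) ^ (n - 1) * INR (d n))))
    (Cdiv (Cmul (RtoC ((INR (d 1%nat) - 1) * INR (d 1%nat))) (Cpow z (d 1%nat)))
          (Cadd (Cmul (RtoC (INR (d 1%nat) - 1)) (Cpow z (d 1%nat))) C1)).

Definition is_crit_point (n : nat) (d : nat -> nat) (a : nat -> Cx) (z : Cx) : Prop :=
  z <> C0 /\
  (forall k, (1 <= k <= n - 1)%nat -> Csub (Cpow z (Dd d k)) (Cpow (a k) (Dd d k)) <> C0) /\
  Cadd (Cmul (RtoC (INR (d 1%nat) - 1)) (Cpow z (d 1%nat))) C1 <> C0 /\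
  crit_lhs n d a z = C0.

(* Main.v *)
From Coquelicot Require Import Coquelicot.
From Stdlib Require Import Reals Lra Lia.
Require Import Defs.
Open Scope R_scope.

Definition toC (z : Cx) : Complex.C := (Defs.Re z, Defs.Im z).

Lemma toC_inj z w : toC z = toC w -> z = w.
Proof. destruct z, w; unfold toC; simpl; intros H; inversion H; auto. Qed.

Lemma toC_RtoC r : toC (Defs.RtoC r) = Complex.RtoC r.
Proof. reflexivity. Qed.
Lemma toC_C0 : toC C0 = 0%C. Proof. reflexivity. Qed.
Lemma toC_C1 : toC C1 = 1%C. Proof. reflexivity. Qed.
Lemma toC_add z w : toC (Cadd z w) = (toC z + toC w)%C. Proof. reflexivity. Qed.
Lemma toC_opp z : toC (Defs.Copp z) = (- toC z)%C. Proof. reflexivity. Qed.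
Lemma toC_sub z w : toC (Csub z w) = (toC z - toC w)%C. Proof. reflexivity. Qed.
Lemma toC_mul z w : toC (Cmul z w) = (toC z * toC w)%C. Proof. reflexivity. Qed.
Lemma toC_inv z : toC (Defs.Cinv z) = (/ toC z)%C.
Proof. unfold toC, Defs.Cinv, Complex.Cinv; simpl. f_equal; f_equal; ring. Qed.
Lemma toC_div z w : toC (Defs.Cdiv z w) = (toC z / toC w)%C.
Proof. unfold Defs.Cdiv. rewrite toC_mul, toC_inv. reflexivity. Qed.
Lemma toC_pow z k : toC (Defs.Cpow z k) = (toC z ^ k)%C.
Proof. induction k; simpl. reflexivity. rewrite toC_mul, IHk. reflexivity. Qed.
Lemma Cnorm_toC z : Cnorm z = Cmod (toC z).
Proof. unfold Cnorm, Cmod, toC; simpl. f_equal; ring. Qed.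
Lemma toC_expi th : toC (Cexpi th) = (cos th, sin th).
Proof. reflexivity. Qed.

Fixpoint CS (f : nat -> Complex.C) (m : nat) : Complex.C :=
  match m with O => 0%C | S m' => (CS f m' + f m)%C end.

Lemma toC_sum f m : toC (Csum1 f m) = CS (fun k => toC (f k)) m.
Proof. induction m; simpl. reflexivity. rewrite toC_add, IHm. reflexivity. Qed.

Lemma Cmod_sub_ge x y : Cmod x - Cmod y <= Cmod (x - y)%C.
Proof.
  assert (H := Cmod_triangle (x - y)%C y).
  replace (x - y + y)%C with x in H by ring. lra.
Qed.
Lemma Cmod_sub_ge' x y : Cmod y - Cmod x <= Cmod (x - y)%C.
Proof.
  assert (H := Cmod_triangle (y - x)%C x).
  replace (y - x + x)%C with y in H by ring.
  replace (y - x)%C with (- (x - y))%C in H by ring. rewrite Cmod_opp in H. lra.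
Qed.
Lemma Cmod_sub_le x y : Cmod (x - y)%C <= Cmod x + Cmod y.
Proof.
  unfold Cminus. eapply Rle_trans. apply Cmod_triangle. rewrite Cmod_opp. lra.
Qed.

Lemma pow_diff m (z z' : Complex.C) R : Cmod z <= R -> Cmod z' <= R ->
  Cmod (z ^ (S m) - z' ^ (S m))%C <= INR (S m) * R ^ m * Cmod (z - z')%C.
Proof.
  intros Hz Hz'. assert (HR : 0 <= R) by (eapply Rle_trans; [apply Cmod_ge_0|eauto]).
  induction m.
  - simpl. replace (z * 1 - z' * 1)%C with (z - z')%C by ring. lra.
  - replace (z ^ S (S m) - z' ^ S (S m))%C with
      (z * (z ^ S m - z' ^ S m) + z' ^ S m * (z - z'))%C by (simpl; ring).
    eapply Rle_trans. apply Cmod_triangle. rewrite !Cmod_mult, Cmod_pow.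
    assert (H1 : Cmod z * Cmod (z ^ S m - z' ^ S m)%C <= R * (INR (S m) * R ^ m * Cmod (z - z')%C)).
    { apply Rmult_le_compat; auto using Cmod_ge_0. }
    assert (H2 : Cmod z' ^ S m * Cmod (z - z')%C <= R ^ S m * Cmod (z - z')%C).
    { apply Rmult_le_compat_r. apply Cmod_ge_0. apply pow_incr. split; auto using Cmod_ge_0. }
    rewrite (S_INR (S m)). simpl in *. nra.
Qed.

Lemma Cmod_le_sum (c : Complex.C) : Cmod c <= 2 * (Rabs (fst c) + Rabs (snd c)).
Proof.
  eapply Rle_trans. apply Cmod_2Rmax.
  assert (sqrt 2 <= 2).
  { replace 2 with (sqrt (2*2)) at 2 by (rewrite sqrt_square; lra).
    apply sqrt_le_1_alt. lra. }
  assert (Rmax (Rabs (fst c)) (Rabs (snd c)) <= Rabs (fst c) + Rabs (snd c)).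
  { apply Rmax_le_Rplus; apply Rabs_pos. }
  assert (0 <= Rmax (Rabs (fst c)) (Rabs (snd c))).
  { eapply Rle_trans. apply Rabs_pos. apply Rmax_l. }
  assert (0 <= sqrt 2) by apply sqrt_pos. nra.
Qed.

Lemma le_eps a b : (forall e, 0 < e -> a <= b + e) -> a <= b.
Proof. intros H. destruct (Rle_dec a b); auto. specialize (H ((a - b)/2)). lra. Qed.

Lemma half_pow_small c : 0 <= c -> forall e, 0 < e -> exists N, forall n, (n >= N)%nat -> c * (/2)^n < e.
Proof.
  intros Hc e He.
  destruct (pow_lt_1_zero (/2)) with (y := e / (c + 1)) as [N HN].
  { rewrite Rabs_pos_eq; lra. }
  { apply Rdiv_lt_0_compat; lra. }
  exists N. intros n Hn. specialize (HN n Hn).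
  rewrite Rabs_pos_eq in HN by (apply pow_le; lra).
  assert (0 <= (/2)^n) by (apply pow_le; lra).
  apply Rmult_lt_compat_r with (r := c + 1) in HN; [|lra].
  unfold Rdiv in HN. rewrite Rmult_assoc, Rinv_l in HN by lra. nra.
Qed.

Fixpoint iterC (f : Complex.C -> Complex.C) (k : nat) : Complex.C :=
  match k with O => 0%C | S k' => f (iterC f k') end.

Lemma fixed_point (Phi : Complex.C -> Complex.C) r : 0 <= r ->
  (forall t, Cmod t <= r -> Cmod (Phi t) <= r) ->
  (forall t t', Cmod t <= r -> Cmod t' <= r -> Cmod (Phi t - Phi t')%C <= /2 * Cmod (t - t')%C) ->
  exists t, Cmod t <= r /\ Phi t = t.
Proof.
  intros Hr Hin Hlip.
  set (x := iterC Phi).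
  assert (Hx : forall k, Cmod (x k) <= r).
  { induction k. change (x 0%nat) with (0 : Complex.C). rewrite Cmod_0. lra. change (x (S k)) with (Phi (x k)). apply Hin. auto. }
  assert (Hstep : forall k, Cmod (x (S k) - x k)%C <= r * (/2)^k).
  { induction k.
    - change (x 1%nat) with (Phi 0%C). change (x 0%nat) with (0 : Complex.C). replace (Phi 0%C - 0)%C with (Phi 0%C) by ring.
      rewrite Rmult_1_r. apply Hin. rewrite Cmod_0. lra.
    - change (x (S (S k))) with (Phi (x (S k))). change (x (S k)) with (Phi (x k)) at 2.
      eapply Rle_trans. apply Hlip; auto. simpl. simpl in IHk. nra. }
  assert (Hdist : forall k p, Cmod (x (k + p)%nat - x k)%C <= 2 * r * (/2)^k * (1 - (/2)^p)).
  { intros k p. induction p.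
    - rewrite Nat.add_0_r. replace (x k - x k)%C with (0 : Complex.C) by ring. rewrite Cmod_0. simpl. lra.
    - replace (x (k + S p)%nat - x k)%C with ((x (S (k + p)) - x (k+p)%nat) + (x (k+p)%nat - x k))%C
        by (rewrite Nat.add_succ_r; ring).
      eapply Rle_trans. apply Cmod_triangle.
      assert (H1 := Hstep (k + p)%nat). rewrite pow_add in H1. simpl. nra. }
  assert (Hdist2 : forall k m, (m >= k)%nat -> Cmod (x m - x k)%C <= 2 * r * (/2)^k).
  { intros k m Hm. replace m with (k + (m - k))%nat by lia.
    eapply Rle_trans. apply Hdist.
    assert (0 <= (/2)^(m-k)) by (apply pow_le; lra).
    assert (0 <= (/2)^k) by (apply pow_le; lra).
    assert (0 <= r * (/2)^k * (/2)^(m-k)) by (apply Rmult_le_pos; [apply Rmult_le_pos|]; auto).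
    nra. }
  assert (Hcauchy : forall (g : Complex.C -> R), (forall c, Rabs (g c) <= Cmod c) ->
            (forall c c', g (c - c')%C = g c - g c') -> Cauchy_crit (fun k => g (x k))).
  { intros g Hg Hgl e He.
    destruct (half_pow_small (2 * r)) with (e := e) as [N HN]; [lra|auto|].
    exists N. intros k m Hk Hm. unfold Rdist. rewrite <- Hgl.
    eapply Rle_lt_trans. apply Hg.
    destruct (Nat.le_ge_cases k m).
    - replace (x k - x m)%C with (- (x m - x k))%C by ring. rewrite Cmod_opp.
      eapply Rle_lt_trans. apply Hdist2. lia. apply HN. lia.
    - eapply Rle_lt_trans. apply Hdist2. lia. apply HN. lia. }
  destruct (R_complete _ (Hcauchy fst ltac:(intros c; eapply Rle_trans; [apply Rmax_l|apply Rmax_Cmod]) ltac:(intros [] []; reflexivity))) as [l1 Hl1].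
  destruct (R_complete _ (Hcauchy snd ltac:(intros c; eapply Rle_trans; [apply Rmax_r|apply Rmax_Cmod]) ltac:(intros [] []; reflexivity))) as [l2 Hl2].
  set (l := (l1, l2) : Complex.C).
  assert (Hlim : forall k, Cmod (x k - l)%C <= 2 * r * (/2)^k).
  { intros k. apply le_eps. intros e He.
    destruct (Hl1 (e/8)) as [N1 HN1]; [lra|]. destruct (Hl2 (e/8)) as [N2 HN2]; [lra|].
    set (m := (k + N1 + N2)%nat).
    specialize (HN1 m ltac:(unfold m; lia)). specialize (HN2 m ltac:(unfold m; lia)).
    unfold Rdist in HN1, HN2.
    replace (x k - l)%C with ((x k - x m) + (x m - l))%C by ring.
    eapply Rle_trans. apply Cmod_triangle.
    replace (x k - x m)%C with (- (x m - x k))%C by ring. rewrite Cmod_opp.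
    assert (Hd := Hdist2 k m ltac:(unfold m; lia)).
    assert (He2 := Cmod_le_sum (x m - l)%C).
    replace (fst (x m - l)%C) with (fst (x m) - l1) in He2 by (destruct (x m); reflexivity).
    replace (snd (x m - l)%C) with (snd (x m) - l2) in He2 by (destruct (x m); reflexivity).
    lra. }
  exists l. split.
  - apply le_eps. intros e He.
    destruct (half_pow_small (2 * r)) with (e := e) as [N HN]; [lra|auto|].
    specialize (HN N (le_n _)). specialize (Hlim N).
    assert (Ht := Cmod_triangle (x N) (l - x N)%C).
    replace (x N + (l - x N))%C with l in Ht by ring.
    replace (l - x N)%C with (- (x N - l))%C in Ht by ring. rewrite Cmod_opp in Ht.
    specialize (Hx N). lra.
  - assert (Hl : Cmod l <= r).
    { apply le_eps. intros e He.
      destruct (half_pow_small (2 * r)) with (e := e) as [N HN]; [lra|auto|].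
      specialize (HN N (le_n _)). specialize (Hlim N).
      assert (Ht := Cmod_triangle (x N) (l - x N)%C).
      replace (x N + (l - x N))%C with l in Ht by ring.
      replace (l - x N)%C with (- (x N - l))%C in Ht by ring. rewrite Cmod_opp in Ht.
      specialize (Hx N). lra. }
    assert (Cmod (Phi l - l)%C = 0).
    { apply Rle_antisym; [|apply Cmod_ge_0]. apply le_eps. intros e He. rewrite Rplus_0_l.
      destruct (half_pow_small (4 * r)) with (e := e) as [N HN]; [lra|auto|].
      specialize (HN N (le_n _)).
      replace (Phi l - l)%C with ((Phi l - Phi (x N)) + (x (S N) - l))%C by (change (x (S N)) with (Phi (x N)); ring).
      eapply Rle_trans. apply Cmod_triangle.
      assert (H1 := Hlip l (x N) Hl (Hx N)).
      replace (l - x N)%C with (- (x N - l))%C in H1 by ring. rewrite Cmod_opp in H1.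
      assert (H2 := Hlim (S N)). assert (H3 := Hlim N). simpl in H2. lra. }
    assert (Hz := Cmod_eq_0 _ H).
    replace (Phi l) with ((Phi l - l) + l)%C by ring. rewrite Hz. ring.
Qed.

Lemma Bpow D r : 0 <= r -> (1 + r)^D * (1 - INR D * r) <= 1.
Proof.
  intros Hr. induction D.
  - simpl. lra.
  - rewrite S_INR. simpl.
    assert (0 <= (1+r)^D) by (apply pow_le; lra).
    assert (0 <= INR D) by apply pos_INR.
    assert (0 <= (1+r)^D * r * r * (INR D + 1)) by (repeat apply Rmult_le_pos; lra).
    nra.
Qed.

Lemma Bpow2 D r : 0 <= r -> INR D * r <= /2 -> (1 + r)^D <= 2.
Proof.
  intros Hr H. assert (H1 := Bpow D r Hr).
  assert (0 <= (1+r)^D) by (apply pow_le; lra). nra.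
Qed.

Definition PP (D : nat) (t : Complex.C) : Complex.C := ((1 + t)^D - 1 - INR D * t)%C.

Lemma PP_succ D t : PP (S D) t = ((1 + t) * PP D t + INR D * t^2)%C.
Proof. unfold PP. rewrite S_INR, RtoC_plus. simpl. ring. Qed.

Lemma Cmod_1t t r : Cmod t <= r -> Cmod (1 + t)%C <= 1 + r.
Proof. intros H. eapply Rle_trans. apply Cmod_triangle. rewrite Cmod_1. lra. Qed.

Lemma Cmod_INR D : Cmod (INR D) = INR D.
Proof. rewrite Cmod_R. apply Rabs_pos_eq, pos_INR. Qed.

Lemma PP_bound D t r : Cmod t <= r -> Cmod (PP D t) <= INR D ^ 2 * r ^ 2 * (1 + r)^D.
Proof.
  intros Ht. assert (Hr : 0 <= r) by (eapply Rle_trans; [apply Cmod_ge_0|eauto]).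
  induction D.
  - unfold PP. replace ((1 + t) ^ 0 - 1 - INR 0 * t)%C with (0 : Complex.C) by (simpl; ring).
    rewrite Cmod_0. simpl; lra.
  - rewrite PP_succ. eapply Rle_trans. apply Cmod_triangle.
    rewrite !Cmod_mult, Cmod_INR, Cmod_pow.
    assert (H1 := Cmod_1t t r Ht).
    assert (H2 : Cmod (1 + t)%C * Cmod (PP D t) <= (1 + r) * (INR D ^ 2 * r ^ 2 * (1 + r) ^ D)).
    { apply Rmult_le_compat; auto using Cmod_ge_0. }
    assert (H3 : Cmod t ^ 2 <= r ^ 2) by (apply pow_incr; split; auto using Cmod_ge_0).
    assert (HB : 1 <= (1 + r)^D) by (apply pow_R1_Rle; lra).
    assert (0 <= INR D) by apply pos_INR.
    rewrite S_INR. replace ((1+r)^(S D)) with ((1+r) * (1+r)^D) by reflexivity.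
    set (B := (1 + r)^D) in *.
    assert (Hq : INR D * Cmod t ^ 2 <= INR D * r ^ 2) by (apply Rmult_le_compat_l; lra).
    assert (0 <= r^2) by (apply pow2_ge_0).
    assert (0 <= r ^ 2 * (1 + r) * B * INR D) by (repeat apply Rmult_le_pos; lra).
    assert (0 <= r ^ 2 * INR D * (B * (1 + r) - 1)) by (repeat apply Rmult_le_pos; nra).
    assert (0 <= r ^ 2 * (1 + r) * B) by (repeat apply Rmult_le_pos; lra).
    nra.
Qed.

Lemma PP_lip D t t' r : Cmod t <= r -> Cmod t' <= r -> INR D * r <= 1 ->
  Cmod (PP D t - PP D t')%C <= 3 * INR D ^ 2 * r * (1 + r)^D * Cmod (t - t')%C.
Proof.
  intros Ht Ht'. assert (Hr : 0 <= r) by (eapply Rle_trans; [apply Cmod_ge_0|eauto]).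
  induction D; intros HD.
  - unfold PP. replace ((1 + t) ^ 0 - 1 - INR 0 * t - ((1 + t') ^ 0 - 1 - INR 0 * t'))%C with (0 : Complex.C) by (simpl; ring).
    rewrite Cmod_0. simpl. lra.
  - assert (HD' : INR D * r <= 1) by (rewrite S_INR in HD; nra).
    specialize (IHD HD').
    replace (PP (S D) t - PP (S D) t')%C with
      ((1 + t) * (PP D t - PP D t') + (t - t') * PP D t' + INR D * (t + t') * (t - t'))%C
      by (rewrite !PP_succ; simpl; ring).
    eapply Rle_trans. apply Cmod_triangle.
    eapply Rle_trans. apply Rplus_le_compat_r. apply Cmod_triangle.
    rewrite !Cmod_mult, Cmod_INR.
    assert (H1 := Cmod_1t t r Ht).
    set (dd := Cmod (t - t')%C). assert (Hdd : 0 <= dd) by apply Cmod_ge_0.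
    assert (HB : 1 <= (1 + r)^D) by (apply pow_R1_Rle; lra).
    assert (0 <= INR D) by apply pos_INR.
    assert (H2 : Cmod (1 + t)%C * Cmod (PP D t - PP D t')%C <= (1 + r) * (3 * INR D ^ 2 * r * (1 + r) ^ D * dd)).
    { apply Rmult_le_compat; auto using Cmod_ge_0. }
    assert (H3 : dd * Cmod (PP D t') <= dd * (INR D ^ 2 * r ^ 2 * (1 + r)^D)).
    { apply Rmult_le_compat_l; auto. apply PP_bound; auto. }
    assert (H4 : Cmod (t + t')%C <= 2 * r) by (eapply Rle_trans; [apply Cmod_triangle|lra]).
    assert (H5 : INR D * Cmod (t + t')%C * dd <= INR D * (2 * r) * dd).
    { apply Rmult_le_compat_r; auto. apply Rmult_le_compat_l; auto. }
    rewrite S_INR. simpl in *.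
    assert (0 <= INR D * r * r * dd * (1+r)^D) by (repeat apply Rmult_le_pos; lra).
    assert (0 <= r * dd * (1+r)^D * (1 + r)) by (repeat apply Rmult_le_pos; lra).
    assert (0 <= INR D * r * dd * (1+r)^D * r) by (repeat apply Rmult_le_pos; lra).
    assert (0 <= INR D * r * dd * (1+r)^D) by (repeat apply Rmult_le_pos; lra).
    assert (0 <= INR D * r * dd * ((1+r)^D - 1)) by (repeat apply Rmult_le_pos; lra).
    nra.
Qed.

Lemma perturbed_root (D : nat) (r : R) (e : Complex.C -> Complex.C) :
  (1 <= D)%nat -> 0 <= r -> INR D * r <= /24 ->
  (forall t, Cmod t <= r -> Cmod (e t) <= INR D * r / 2) ->
  (forall t t', Cmod t <= r -> Cmod t' <= r -> Cmod (e t - e t')%C <= INR D / 4 * Cmod (t - t')%C) ->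
  exists t, Cmod t <= r /\ ((1 + t)^D = 1 + e t)%C.
Proof.
  intros HD Hr HDr He Hl.
  assert (HD1 : 1 <= INR D) by (apply (le_INR 1); auto).
  assert (HB : (1 + r)^D <= 2) by (apply Bpow2; lra).
  assert (HB1 : 1 <= (1 + r)^D) by (apply pow_R1_Rle; lra).
  set (Phi := fun t => ((e t - PP D t) / INR D)%C).
  assert (HDnz : (Complex.RtoC (INR D)) <> 0%C).
  { intros H. apply (f_equal fst) in H. simpl in H. lra. }
  destruct (fixed_point Phi r Hr) as [t [Ht Hfix]].
  - intros t Ht. unfold Phi. rewrite Cmod_div by auto. rewrite Cmod_INR.
    apply Rmult_le_reg_r with (INR D); [lra|]. unfold Rdiv. rewrite Rmult_assoc, Rinv_l, Rmult_1_r by lra.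
    eapply Rle_trans. apply Cmod_sub_le.
    assert (H1 := He t Ht). assert (H2 := PP_bound D t r Ht).
    assert (INR D ^ 2 * r ^ 2 * (1 + r) ^ D <= INR D * r / 2).
    { assert (Hx : 0 <= INR D * r) by nra.
      replace (INR D ^ 2 * r ^ 2 * (1 + r) ^ D) with ((INR D * r) * ((INR D * r) * (1 + r) ^ D)) by ring.
      assert ((INR D * r) * (1 + r) ^ D <= /24 * 2).
      { apply Rmult_le_compat; lra. }
      assert ((INR D * r) * ((INR D * r) * (1 + r) ^ D) <= (INR D * r) * (/24 * 2)).
      { apply Rmult_le_compat_l; lra. }
      lra. }
    lra.
  - intros t t' Ht Ht'. unfold Phi.
    replace ((e t - PP D t) / INR D - (e t' - PP D t') / INR D)%C with
      (((e t - e t') - (PP D t - PP D t')) / INR D)%C by (field; auto).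
    rewrite Cmod_div by auto. rewrite Cmod_INR.
    apply Rmult_le_reg_r with (INR D); [lra|]. unfold Rdiv. rewrite Rmult_assoc, Rinv_l, Rmult_1_r by lra.
    eapply Rle_trans. apply Cmod_sub_le.
    assert (H1 := Hl t t' Ht Ht'). assert (H2 := PP_lip D t t' r Ht Ht' ltac:(lra)).
    set (dd := Cmod (t - t')%C) in *. assert (0 <= dd) by apply Cmod_ge_0.
    assert (3 * INR D ^ 2 * r * (1 + r) ^ D * dd <= INR D / 4 * dd).
    { simpl. assert (0 <= INR D * r) by nra.
      assert (0 <= INR D * dd * (INR D * r)) by (repeat apply Rmult_le_pos; lra).
      assert (0 <= INR D * dd) by (repeat apply Rmult_le_pos; lra).
      nra. }
    lra.
  - exists t. split; auto. unfold Phi in Hfix.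
    assert (Hfix' : (e t - PP D t)%C = (t * INR D)%C).
    { transitivity (((e t - PP D t) / INR D) * INR D)%C. field; auto. rewrite Hfix. reflexivity. }
    unfold PP in Hfix'. 
    assert (E : ((1 + t) ^ D - 1 - INR D * t)%C = (e t - t * INR D)%C) by (rewrite <- Hfix'; ring).
    transitivity (((1 + t) ^ D - 1 - INR D * t) + 1 + INR D * t)%C. ring. rewrite E. ring.
Qed.

Lemma div_le a b A B : 0 <= a <= A -> 0 < B <= b -> a / b <= A / B.
Proof.
  intros [Ha HA] [HB Hb]. unfold Rdiv. apply Rmult_le_compat; auto.
  left; apply Rinv_0_lt_compat; lra. apply Rinv_le_contravar; lra.
Qed.

Definition zz (w t : Complex.C) : Complex.C := (w * (1 + t))%C.

Lemma zz_bounds w t : Cmod t <= /2 ->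
  Cmod w / 2 <= Cmod (zz w t) /\ Cmod (zz w t) <= 2 * Cmod w.
Proof.
  intros Ht. unfold zz. rewrite Cmod_mult.
  assert (H1 := Cmod_1t t (/2) Ht).
  assert (H2 := Cmod_sub_ge 1 (-t)%C). replace (1 - - t)%C with (1 + t)%C in H2 by ring.
  rewrite Cmod_opp, Cmod_1 in H2.
  assert (0 <= Cmod w) by apply Cmod_ge_0. split; nra.
Qed.

Lemma zz_diff w t t' : Cmod (zz w t - zz w t')%C = Cmod w * Cmod (t - t')%C.
Proof. unfold zz. rewrite <- Cmod_mult. f_equal. ring. Qed.

Lemma diff_core (w b : Complex.C) m (mu : R) t t' : 0 < mu ->
  Cmod t <= /2 -> Cmod t' <= /2 ->
  mu <= Cmod (zz w t ^ S m - b)%C -> mu <= Cmod (zz w t' ^ S m - b)%C ->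
  Cmod (b * (zz w t' ^ S m - zz w t ^ S m) / ((zz w t ^ S m - b) * (zz w t' ^ S m - b)))%C
  <= Cmod b * (INR (S m) * (2 * Cmod w) ^ m * Cmod w * Cmod (t - t')%C) / (mu * mu).
Proof.
  intros Hmu Ht Ht' H1 H2.
  assert (N1 : (zz w t ^ S m - b)%C <> 0%C) by (intros E; rewrite E, Cmod_0 in H1; lra).
  assert (N2 : (zz w t' ^ S m - b)%C <> 0%C) by (intros E; rewrite E, Cmod_0 in H2; lra).
  rewrite Cmod_div by (apply Cmult_neq_0; auto). rewrite !Cmod_mult.
  apply div_le.
  - split. apply Rmult_le_pos; apply Cmod_ge_0. apply Rmult_le_compat_l. apply Cmod_ge_0.
    destruct (zz_bounds w t Ht). destruct (zz_bounds w t' Ht').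
    replace (zz w t' ^ S m - zz w t ^ S m)%C with (- (zz w t ^ S m - zz w t' ^ S m))%C by ring.
    rewrite Cmod_opp. rewrite Rmult_assoc, <- zz_diff. apply pow_diff; auto.
  - split. nra. apply Rmult_le_compat; lra.
Qed.

Lemma small_term (w b : Complex.C) (m : nat) (t : Complex.C) :
  0 < Cmod w -> (2 * Cmod w) ^ S m <= /2 * Cmod b -> Cmod t <= /2 ->
  /2 * Cmod b <= Cmod (zz w t ^ S m - b)%C /\
  Cmod (zz w t ^ S m / (zz w t ^ S m - b))%C <= 2 * ((2 * Cmod w) ^ S m / Cmod b).
Proof.
  intros Hw Hb Ht. destruct (zz_bounds w t Ht) as [Z1 Z2].
  assert (Hp : Cmod (zz w t ^ S m)%C <= (2 * Cmod w) ^ S m).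
  { rewrite Cmod_pow. apply pow_incr. split; auto using Cmod_ge_0. }
  assert (Hpos : 0 < (2 * Cmod w) ^ S m) by (apply pow_lt; lra).
  assert (Hden : /2 * Cmod b <= Cmod (zz w t ^ S m - b)%C).
  { assert (H := Cmod_sub_ge' (zz w t ^ S m)%C b). lra. }
  split; auto.
  assert (N1 : (zz w t ^ S m - b)%C <> 0%C) by (intros E; rewrite E, Cmod_0 in Hden; lra).
  rewrite Cmod_div by auto.
  replace (2 * ((2 * Cmod w) ^ S m / Cmod b)) with ((2 * Cmod w) ^ S m / (/2 * Cmod b))
    by (field; lra).
  apply div_le. split; auto using Cmod_ge_0. lra.
Qed.

Lemma small_lip (w b : Complex.C) (m : nat) (t t' : Complex.C) :
  0 < Cmod w -> (2 * Cmod w) ^ S m <= /2 * Cmod b -> Cmod t <= /2 -> Cmod t' <= /2 ->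
  Cmod (zz w t ^ S m / (zz w t ^ S m - b) - zz w t' ^ S m / (zz w t' ^ S m - b))%C
  <= 2 * INR (S m) * ((2 * Cmod w) ^ S m / Cmod b) * Cmod (t - t')%C.
Proof.
  intros Hw Hb Ht Ht'.
  destruct (small_term w b m t Hw Hb Ht) as [H1 _].
  destruct (small_term w b m t' Hw Hb Ht') as [H2 _].
  assert (Hpos : 0 < (2 * Cmod w) ^ S m) by (apply pow_lt; lra).
  assert (Hbp : 0 < Cmod b) by lra.
  assert (N1 : (zz w t ^ S m - b)%C <> 0%C) by (intros E; rewrite E, Cmod_0 in H1; lra).
  assert (N2 : (zz w t' ^ S m - b)%C <> 0%C) by (intros E; rewrite E, Cmod_0 in H2; lra).
  replace (zz w t ^ S m / (zz w t ^ S m - b) - zz w t' ^ S m / (zz w t' ^ S m - b))%C with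
    (b * (zz w t' ^ S m - zz w t ^ S m) / ((zz w t ^ S m - b) * (zz w t' ^ S m - b)))%C
    by (field; auto).
  eapply Rle_trans. apply (diff_core w b m (/2 * Cmod b)); auto. lra.
  right. rewrite <- tech_pow_Rmult. field. lra.
Qed.

Lemma large_term (w b : Complex.C) (m : nat) (t : Complex.C) :
  0 < Cmod w -> Cmod b <= /2 * (Cmod w / 2) ^ S m -> Cmod t <= /2 ->
  /2 * (Cmod w / 2) ^ S m <= Cmod (zz w t ^ S m - b)%C /\
  Cmod (b / (zz w t ^ S m - b))%C <= 2 * (Cmod b / (Cmod w / 2) ^ S m).
Proof.
  intros Hw Hb Ht. destruct (zz_bounds w t Ht) as [Z1 Z2].
  assert (Hp : (Cmod w / 2) ^ S m <= Cmod (zz w t ^ S m)%C).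
  { rewrite Cmod_pow. apply pow_incr. split; auto. lra. }
  assert (Hpos : 0 < (Cmod w / 2) ^ S m) by (apply pow_lt; lra).
  assert (Hden : /2 * (Cmod w / 2) ^ S m <= Cmod (zz w t ^ S m - b)%C).
  { assert (H := Cmod_sub_ge (zz w t ^ S m)%C b). lra. }
  split; auto.
  assert (N1 : (zz w t ^ S m - b)%C <> 0%C) by (intros E; rewrite E, Cmod_0 in Hden; lra).
  rewrite Cmod_div by auto.
  replace (2 * (Cmod b / (Cmod w / 2) ^ S m)) with (Cmod b / (/2 * (Cmod w / 2) ^ S m))
    by (field; lra).
  apply div_le. split; auto using Cmod_ge_0. lra. lra.
Qed.

Lemma large_lip (w b : Complex.C) (m : nat) (t t' : Complex.C) :
  0 < Cmod w -> Cmod b <= /2 * (Cmod w / 2) ^ S m -> Cmod t <= /2 -> Cmod t' <= /2 ->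
  Cmod (b / (zz w t ^ S m - b) - b / (zz w t' ^ S m - b))%C
  <= 2 * INR (S m) * 4 ^ S m * (Cmod b / (Cmod w / 2) ^ S m) * Cmod (t - t')%C.
Proof.
  intros Hw Hb Ht Ht'.
  destruct (large_term w b m t Hw Hb Ht) as [H1 _].
  destruct (large_term w b m t' Hw Hb Ht') as [H2 _].
  assert (Hpos : 0 < (Cmod w / 2) ^ S m) by (apply pow_lt; lra).
  assert (N1 : (zz w t ^ S m - b)%C <> 0%C) by (intros E; rewrite E, Cmod_0 in H1; lra).
  assert (N2 : (zz w t' ^ S m - b)%C <> 0%C) by (intros E; rewrite E, Cmod_0 in H2; lra).
  replace (b / (zz w t ^ S m - b) - b / (zz w t' ^ S m - b))%C with
    (b * (zz w t' ^ S m - zz w t ^ S m) / ((zz w t ^ S m - b) * (zz w t' ^ S m - b)))%C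
    by (field; auto).
  eapply Rle_trans. apply (diff_core w b m (/2 * (Cmod w / 2) ^ S m)); auto. lra.
  right. replace (2 * Cmod w) with (4 * (Cmod w / 2)) by field.
  rewrite Rpow_mult_distr. rewrite <- !tech_pow_Rmult. field.
  split. apply pow_nonzero. lra. lra.
Qed.

Lemma ln_le' x y : 0 < x -> x <= y -> ln x <= ln y.
Proof. intros Hx [H|H]. left; apply ln_increasing; auto. subst; lra. Qed.
Lemma exp_le' x y : x <= y -> exp x <= exp y.
Proof. intros [H|H]. left; apply exp_increasing; auto. subst; lra. Qed.

Lemma Rpower_pos x y : 0 < Rpower x y.
Proof. apply exp_pos. Qed.

Lemma Rpower_le_self s e : 0 < s <= 1 -> 1 <= e -> Rpower s e <= s.
Proof.
  intros [Hs Hs1] He. unfold Rpower.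
  assert (ln s <= 0) by (rewrite <- ln_1; apply ln_le'; lra).
  replace s with (exp (ln s)) at 2 by (apply exp_ln; lra). apply exp_le'. nra.
Qed.

Lemma Rpower_le1 s e : 0 < s <= 1 -> 0 <= e -> Rpower s e <= 1.
Proof.
  intros [Hs Hs1] He. unfold Rpower.
  assert (ln s <= 0) by (rewrite <- ln_1; apply ln_le'; lra).
  rewrite <- exp_0. apply exp_le'. nra.
Qed.

Lemma Rpower_inv_pow x m : 0 < x -> (1 <= m)%nat -> (Rpower x (/ INR m)) ^ m = x.
Proof.
  intros Hx Hm. rewrite <- Rpower_pow by apply Rpower_pos.
  rewrite Rpower_mult. rewrite Rinv_l. apply Rpower_1; auto.
  apply not_0_INR. lia.
Qed.

Lemma Rpower_inv_pow_le s d D : 0 < s <= 1 -> (1 <= d)%nat -> (d <= D)%nat ->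
  (Rpower s (/ INR d)) ^ D <= s.
Proof.
  intros Hs Hd HD. rewrite <- Rpower_pow by apply Rpower_pos.
  rewrite Rpower_mult. apply Rpower_le_self; auto.
  assert (1 <= INR d) by (apply (le_INR 1); auto).
  assert (INR d <= INR D) by (apply le_INR; auto).
  apply Rmult_le_reg_l with (INR d). lra. rewrite <- Rmult_assoc, Rinv_r by lra. lra.
Qed.

Lemma rho_bounds c e dm : 1 <= dm -> / dm <= c <= dm -> 0 < e <= 1 ->
  / dm <= Rpower c e <= dm.
Proof.
  intros Hdm [Hc1 Hc2] He.
  assert (Hc : 0 < c). { assert (0 < / dm) by (apply Rinv_0_lt_compat; lra). lra. }
  assert (L1 : ln c <= ln dm) by (apply ln_le'; lra).
  assert (L2 : ln (/ dm) <= ln c) by (apply ln_le'; auto; apply Rinv_0_lt_compat; lra).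
  rewrite ln_Rinv in L2 by lra.
  assert (L0 : 0 <= ln dm) by (rewrite <- ln_1; apply ln_le'; lra).
  unfold Rpower. split.
  - rewrite <- (exp_ln (/ dm)) by (apply Rinv_0_lt_compat; lra). rewrite ln_Rinv by lra.
    apply exp_le'. destruct (Rle_dec 0 (ln c)); nra.
  - replace dm with (exp (ln dm)) at 1 by (apply exp_ln; lra). apply exp_le'. destruct (Rle_dec 0 (ln c)); nra.
Qed.

Lemma small_bundle w b m (ka : R) t t' : 0 < Cmod w -> 0 <= ka <= /2 ->
  (2 * Cmod w) ^ S m <= ka * Cmod b -> Cmod t <= /2 -> Cmod t' <= /2 ->
  (zz w t ^ S m - b)%C <> 0%C /\
  Cmod (zz w t ^ S m / (zz w t ^ S m - b))%C <= 2 * ka /\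
  Cmod (zz w t ^ S m / (zz w t ^ S m - b) - zz w t' ^ S m / (zz w t' ^ S m - b))%C
  <= 2 * INR (S m) * ka * Cmod (t - t')%C.
Proof.
  intros Hw Hka Hb Ht Ht'.
  assert (Hpos : 0 < (2 * Cmod w) ^ S m) by (apply pow_lt; lra).
  assert (Hbp : 0 < Cmod b) by (destruct (Rle_dec (Cmod b) 0); nra).
  assert (Hb' : (2 * Cmod w) ^ S m <= /2 * Cmod b) by nra.
  assert (HX : (2 * Cmod w) ^ S m / Cmod b <= ka).
  { apply Rmult_le_reg_r with (Cmod b); auto. unfold Rdiv. rewrite Rmult_assoc, Rinv_l; lra. }
  destruct (small_term w b m t Hw Hb' Ht) as [H1 H2].
  assert (H3 := small_lip w b m t t' Hw Hb' Ht Ht').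
  split; [|split].
  - intros E. rewrite E, Cmod_0 in H1. lra.
  - lra.
  - eapply Rle_trans. apply H3. apply Rmult_le_compat_r. apply Cmod_ge_0.
    apply Rmult_le_compat_l; auto. assert (0 <= INR (S m)) by apply pos_INR. lra.
Qed.

Lemma large_bundle w b m (ka : R) t t' : 0 < Cmod w -> 0 <= ka <= /2 ->
  Cmod b <= ka * (Cmod w / 2) ^ S m -> Cmod t <= /2 -> Cmod t' <= /2 ->
  (zz w t ^ S m - b)%C <> 0%C /\
  Cmod (b / (zz w t ^ S m - b))%C <= 2 * ka /\
  Cmod (b / (zz w t ^ S m - b) - b / (zz w t' ^ S m - b))%C
  <= 2 * INR (S m) * 4 ^ S m * ka * Cmod (t - t')%C.
Proof.
  intros Hw Hka Hb Ht Ht'.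
  assert (Hpos : 0 < (Cmod w / 2) ^ S m) by (apply pow_lt; lra).
  assert (Hb' : Cmod b <= /2 * (Cmod w / 2) ^ S m) by nra.
  assert (HY : Cmod b / (Cmod w / 2) ^ S m <= ka).
  { apply Rmult_le_reg_r with ((Cmod w / 2) ^ S m); auto. unfold Rdiv. rewrite Rmult_assoc, Rinv_l; lra. }
  destruct (large_term w b m t Hw Hb' Ht) as [H1 H2].
  assert (H3 := large_lip w b m t t' Hw Hb' Ht Ht').
  split; [|split].
  - intros E. rewrite E, Cmod_0 in H1. assert (0 < /2 * (Cmod w / 2) ^ S m) by lra. lra.
  - lra.
  - eapply Rle_trans. apply H3. apply Rmult_le_compat_r. apply Cmod_ge_0.
    apply Rmult_le_compat_l; auto. assert (0 <= INR (S m)) by apply pos_INR.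
    assert (0 < 4 ^ S m) by (apply pow_lt; lra). nra.
Qed.

Definition sg (k : nat) : R := (-1) ^ (k - 1).

Definition Tk (d : nat -> nat) (A : nat -> Complex.C) (k : nat) (z : Complex.C) : Complex.C :=
  (Complex.RtoC (sg k * INR (Dd d k)) * z ^ Dd d k / (z ^ Dd d k - A k ^ Dd d k))%C.

Definition Gk (d : nat -> nat) (A : nat -> Complex.C) (i k : nat) (z : Complex.C) : Complex.C :=
  if Nat.ltb k i then Tk d A k z
  else if Nat.eqb k i then 0%C
  else (Complex.RtoC (sg k * INR (Dd d k)) * (A k ^ Dd d k / (z ^ Dd d k - A k ^ Dd d k)))%C.

Lemma Cmod_coef k D : Cmod (Complex.RtoC (sg k * INR D)) = INR D.
Proof.
  rewrite Cmod_R, Rabs_mult, (Rabs_pos_eq (INR D)) by apply pos_INR. unfold sg. rewrite pow_1_abs. ring.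
Qed.

Lemma lin_bound (c x y : Complex.C) (M ca cl lam dd : R) :
  Cmod c <= M -> Cmod x <= ca -> Cmod (x - y)%C <= cl * dd -> 0 <= dd ->
  M * ca <= lam -> M * cl <= lam -> 0 <= ca ->
  Cmod (c * x)%C <= lam /\ Cmod (c * x - c * y)%C <= lam * dd.
Proof.
  intros Hc Hx Hxy Hdd H1 H2 Hca.
  assert (0 <= Cmod c) by apply Cmod_ge_0.
  split.
  - rewrite Cmod_mult. assert (Cmod c * Cmod x <= M * ca) by (apply Rmult_le_compat; auto using Cmod_ge_0). lra.
  - replace (c * x - c * y)%C with (c * (x - y))%C by ring. rewrite Cmod_mult.
    assert (0 <= Cmod (x - y)%C) by apply Cmod_ge_0.
    assert (Cmod c * Cmod (x - y)%C <= M * (cl * dd)) by (apply Rmult_le_compat; auto).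
    nra.
Qed.

Lemma Gk_props d A i k w (ka M : R) (E : nat) t t' :
  0 < Cmod w -> 0 <= ka <= /2 -> 1 <= M -> INR (Dd d k) <= M -> (1 <= Dd d k <= E)%nat ->
  ((k < i)%nat -> (2 * Cmod w) ^ Dd d k <= ka * Cmod (A k ^ Dd d k)%C) ->
  ((i < k)%nat -> Cmod (A k ^ Dd d k)%C <= ka * (Cmod w / 2) ^ Dd d k) ->
  Cmod t <= /2 -> Cmod t' <= /2 ->
  (k <> i -> (zz w t ^ Dd d k - A k ^ Dd d k)%C <> 0%C) /\
  Cmod (Gk d A i k (zz w t)) <= 2 * M * M * 4 ^ E * ka /\
  Cmod (Gk d A i k (zz w t) - Gk d A i k (zz w t'))%C <= 2 * M * M * 4 ^ E * ka * Cmod (t - t')%C.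
Proof.
  intros Hw Hka HM HDM HDE Hlt Hgt Ht Ht'.
  assert (H4 : 1 <= 4 ^ E) by (apply pow_R1_Rle; lra).
  assert (H4' : forall m, (m <= E)%nat -> 4 ^ m <= 4 ^ E) by (intros; apply Rle_pow; lra || auto).
  assert (Hdd : 0 <= Cmod (t - t')%C) by apply Cmod_ge_0.
  assert (HMka : 0 <= M * ka) by nra.
  assert (HM4 : 1 <= M * 4 ^ E) by nra.
  assert (HL1 : M * (2 * ka) <= 2 * M * M * 4 ^ E * ka).
  { assert (0 <= M * ka * (M * 4 ^ E - 1)) by (apply Rmult_le_pos; lra). nra. }
  assert (HL2 : forall x, 0 <= x <= M -> M * (2 * x * ka) <= 2 * M * M * 4 ^ E * ka).
  { intros x Hx. assert (0 <= M * ka * (M * 4 ^ E - x)) by (apply Rmult_le_pos; nra). nra. }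
  unfold Gk, Tk.
  remember (Dd d k) as Dk. destruct Dk as [|m]; [lia|].
  assert (HSm : INR (S m) <= M) by auto.
  assert (HSm0 : 0 <= INR (S m)) by apply pos_INR.
  destruct (Nat.ltb_spec k i) as [Hki|Hki].
  - destruct (small_bundle w (A k ^ S m)%C m ka t t' Hw Hka (Hlt Hki) Ht Ht') as [N1 [B1 L1]].
    assert (Hc := Cmod_coef k (S m)).
    assert (Hc' : Cmod (Complex.RtoC (sg k * INR (S m))) <= M) by lra.
    replace (Complex.RtoC (sg k * INR (S m)) * zz w t ^ S m / (zz w t ^ S m - A k ^ S m))%C with
      (Complex.RtoC (sg k * INR (S m)) * (zz w t ^ S m / (zz w t ^ S m - A k ^ S m)))%C
      by (unfold Complex.Cdiv; ring).
    replace (Complex.RtoC (sg k * INR (S m)) * zz w t' ^ S m / (zz w t' ^ S m - A k ^ S m))%C with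
      (Complex.RtoC (sg k * INR (S m)) * (zz w t' ^ S m / (zz w t' ^ S m - A k ^ S m)))%C
      by (unfold Complex.Cdiv; ring).
    destruct (lin_bound _ _ _ M (2 * ka) (2 * INR (S m) * ka) (2 * M * M * 4 ^ E * ka) _
      Hc' B1 L1 Hdd) as [R1 R2]; try nra.
    apply HL2; lra.
    split; [|split]; auto. 
  - destruct (Nat.eqb_spec k i) as [Hki'|Hki'].
    + split; [intros; contradiction|]. rewrite Cmod_0.
      replace (0 - 0)%C with (0 : Complex.C) by ring. rewrite Cmod_0.
      split; nra.
    + assert (Hik : (i < k)%nat) by lia.
      destruct (large_bundle w (A k ^ S m)%C m ka t t' Hw Hka (Hgt Hik) Ht Ht') as [N1 [B1 L1]].
      assert (Hc := Cmod_coef k (S m)).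
      assert (Hc' : Cmod (Complex.RtoC (sg k * INR (S m))) <= M) by lra.
      assert (H4m := H4' (S m) ltac:(lia)).
      destruct (lin_bound _ _ _ M (2 * ka) (2 * INR (S m) * 4 ^ S m * ka) (2 * M * M * 4 ^ E * ka) _
        Hc' B1 L1 Hdd) as [R1 R2]; try nra.
      { assert (0 <= 4 ^ S m) by (apply pow_le; lra).
        assert (INR (S m) * 4 ^ S m <= M * 4 ^ E) by (apply Rmult_le_compat; lra).
        assert (0 <= M * ka * (M * 4 ^ E - INR (S m) * 4 ^ S m)) by (apply Rmult_le_pos; lra).
        nra. }
      split; [|split]; auto.
Qed.

Definition Lt (d : nat -> nat) (z : Complex.C) : Complex.C :=
  (Complex.RtoC ((INR (d 1%nat) - 1) * INR (d 1%nat)) * z ^ d 1%nat /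
     (Complex.RtoC (INR (d 1%nat) - 1) * z ^ d 1%nat + 1))%C.

Lemma Lt_props d w (ka M : R) (E : nat) t t' :
  0 < Cmod w -> 0 <= ka <= /2 -> 1 <= M -> INR (d 1%nat) <= M -> (2 <= d 1%nat <= E)%nat ->
  (2 * Cmod w) ^ d 1%nat * (INR (d 1%nat) - 1) <= ka ->
  Cmod t <= /2 -> Cmod t' <= /2 ->
  (Complex.RtoC (INR (d 1%nat) - 1) * zz w t ^ d 1%nat + 1)%C <> 0%C /\
  Cmod (Lt d (zz w t)) <= 2 * M * M * 4 ^ E * ka /\
  Cmod (Lt d (zz w t) - Lt d (zz w t'))%C <= 2 * M * M * 4 ^ E * ka * Cmod (t - t')%C.
Proof.
  intros Hw Hka HM HDM HDE HX Ht Ht'.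
  assert (H4 : 1 <= 4 ^ E) by (apply pow_R1_Rle; lra).
  assert (Hdd : 0 <= Cmod (t - t')%C) by apply Cmod_ge_0.
  assert (HMka : 0 <= M * ka) by nra.
  assert (HM4 : 1 <= M * 4 ^ E) by nra.
  assert (HL2 : forall x, 0 <= x <= M -> M * (2 * x * ka) <= 2 * M * M * 4 ^ E * ka).
  { intros x Hx. assert (0 <= M * ka * (M * 4 ^ E - x)) by (apply Rmult_le_pos; nra). nra. }
  assert (Hq : 1 <= INR (d 1%nat) - 1).
  { assert (2 <= INR (d 1%nat)) by (apply (le_INR 2); lia). lra. }
  set (q := INR (d 1%nat) - 1) in *.
  set (bL := Complex.RtoC (- / q)).
  assert (HbL : Cmod bL = / q).
  { unfold bL. rewrite Cmod_R, Rabs_Ropp, Rabs_pos_eq; auto. left; apply Rinv_0_lt_compat; lra. }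
  remember (d 1%nat) as d1. destruct d1 as [|m]; [lia|].
  assert (Hb : (2 * Cmod w) ^ S m <= ka * Cmod bL).
  { rewrite HbL. apply Rmult_le_reg_r with q; [lra|]. rewrite Rmult_assoc, Rinv_l by lra. lra. }
  destruct (small_bundle w bL m ka t t' Hw Hka Hb Ht Ht') as [N1 [B1 L1]].
  destruct (small_bundle w bL m ka t' t Hw Hka Hb Ht' Ht) as [N2 _].
  assert (Hqnz : Complex.RtoC q <> 0%C).
  { intros E0. apply (f_equal fst) in E0. simpl in E0. lra. }
  assert (Eq1 : forall z, (z ^ S m - bL)%C <> 0%C ->
     (Complex.RtoC (q * INR (S m)) * z ^ S m / (Complex.RtoC q * z ^ S m + 1))%C
     = (Complex.RtoC (INR (S m)) * (z ^ S m / (z ^ S m - bL)))%C).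
  { intros z Hz. unfold bL.
    assert (E1 : (Complex.RtoC q * z ^ S m + 1)%C = (Complex.RtoC q * (z ^ S m - Complex.RtoC (- / q)))%C).
    { rewrite RtoC_opp, RtoC_inv by lra. field. auto. }
    rewrite E1. rewrite RtoC_mult. field. split; auto. }
  assert (Ne : forall z, (z ^ S m - bL)%C <> 0%C -> (Complex.RtoC q * z ^ S m + 1)%C <> 0%C).
  { intros z Hz E0. unfold bL in Hz. apply Hz.
    rewrite RtoC_opp, RtoC_inv by lra.
    replace (z ^ S m - - / Complex.RtoC q)%C with ((Complex.RtoC q * z ^ S m + 1) / Complex.RtoC q)%C by (field; auto).
    rewrite E0. field. auto. }
  unfold Lt. rewrite <- Heqd1. fold q.
  rewrite (Eq1 _ N1), (Eq1 _ N2).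
  assert (Hc' : Cmod (Complex.RtoC (INR (S m))) <= M) by (rewrite Cmod_INR; lra).
  assert (HSm0 : 0 <= INR (S m)) by apply pos_INR.
  destruct (lin_bound _ _ _ M (2 * ka) (2 * INR (S m) * ka) (2 * M * M * 4 ^ E * ka) _
     Hc' B1 L1 Hdd) as [R1 R2]; try nra.
  all: try (apply HL2; lra). split; [|split]; auto.
Qed.

Lemma CS_ext f g N : (forall k, (1 <= k <= N)%nat -> f k = g k) -> CS f N = CS g N.
Proof.
  induction N; intros H; simpl; auto.
  rewrite IHN by (intros; apply H; lia). rewrite H by lia. reflexivity.
Qed.

Lemma CS_add f g N : CS (fun k => f k + g k)%C N = (CS f N + CS g N)%C.
Proof. induction N; simpl. ring. rewrite IHN. ring. Qed.

Lemma CS_sub f g N : (CS f N - CS g N)%C = CS (fun k => f k - g k)%C N.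
Proof. induction N; simpl. ring. rewrite <- IHN. ring. Qed.

Lemma CS_bound f N lam : (forall k, (1 <= k <= N)%nat -> Cmod (f k) <= lam) ->
  Cmod (CS f N) <= INR N * lam.
Proof.
  induction N; intros H.
  - simpl. rewrite Cmod_0. lra.
  - change (CS f (S N)) with (CS f N + f (S N))%C. eapply Rle_trans. apply Cmod_triangle.
    assert (H1 := IHN ltac:(intros; apply H; lia)). assert (H2 := H (S N) ltac:(lia)).
    rewrite S_INR. lra.
Qed.

Lemma CS_delta (x : Complex.C) i N : (1 <= i <= N)%nat ->
  CS (fun k => if Nat.eqb k i then x else 0%C) N = x.
Proof.
  induction N; intros H. lia.
  change (CS (fun k => if Nat.eqb k i then x else 0%C) (S N)) with
    (CS (fun k => if Nat.eqb k i then x else 0%C) N + (if Nat.eqb (S N) i then x else 0%C))%C.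
  destruct (Nat.eqb_spec (S N) i).
  - subst. assert (H0 : forall M, (M <= N)%nat -> CS (fun k => if Nat.eqb k (S N) then x else 0%C) M = 0%C).
    { induction M; intros HM. reflexivity.
      change (CS (fun k => if Nat.eqb k (S N) then x else 0%C) (S M)) with
        (CS (fun k => if Nat.eqb k (S N) then x else 0%C) M + (if Nat.eqb (S M) (S N) then x else 0%C))%C.
      rewrite IHM by lia.
      destruct (Nat.eqb_spec (S M) (S N)); [lia|ring]. }
    rewrite H0 by lia. ring.
  - rewrite IHN by lia. ring.
Qed.

Lemma CS_real (h : nat -> R) N : CS (fun k => Complex.RtoC (h k)) N = Complex.RtoC (Rsum1 h N).
Proof. induction N; simpl. reflexivity. rewrite IHN, RtoC_plus. reflexivity. Qed.

Lemma telescope (d : nat -> nat) i N : (i <= N)%nat ->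
  Rsum1 (fun k => if Nat.ltb i k then sg k * INR (Dd d k) else 0) N + sg (S N) * INR (d (S N))
  = sg (S i) * INR (d (S i)).
Proof.
  intros H. induction N.
  - assert (i = 0%nat) by lia. subst. simpl. ring.
  - destruct (Nat.eq_dec i (S N)).
    + subst. clear IHN H. 
      assert (forall M, (M <= S N)%nat -> Rsum1 (fun k => if Nat.ltb (S N) k then sg k * INR (Dd d k) else 0) M = 0).
      { induction M; intros HM; simpl. reflexivity. rewrite IHM by lia.
        destruct (Nat.ltb_spec (S N) (S M)); [lia|lra]. }
      rewrite H by lia. lra.
    + specialize (IHN ltac:(lia)). simpl Rsum1.
      destruct (Nat.ltb_spec i (S N)); [|lia].
      unfold sg, Dd in *. rewrite plus_INR.
      replace (S (S N) - 1)%nat with (S (S N - 1)) by lia.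
      replace (S N - 1)%nat with N by lia.
      replace (S N - 1)%nat with N in IHN by lia. simpl pow. simpl pow in IHN.
      lra.
Qed.

Definition epsC (n : nat) (d : nat -> nat) (A : nat -> Complex.C) (i : nat) (z : Complex.C) : Complex.C :=
  (CS (fun k => Gk d A i k z) (n - 1) - Lt d z)%C.

Definition critC (n : nat) (d : nat -> nat) (A : nat -> Complex.C) (z : Complex.C) : Complex.C :=
  (CS (fun k => Tk d A k z) (n - 1) + Complex.RtoC (sg n * INR (d n)) - Lt d z)%C.

Lemma crit_decomp n d A i z : (1 <= i <= n - 1)%nat ->
  (forall k, (1 <= k <= n - 1)%nat -> (i < k)%nat -> (z ^ Dd d k - A k ^ Dd d k)%C <> 0%C) ->
  critC n d A z = (epsC n d A i z + Tk d A i z + Complex.RtoC (sg (S i) * INR (d (S i))))%C.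
Proof.
  intros Hi Hnz. unfold critC, epsC.
  rewrite (CS_ext (fun k => Tk d A k z)
     (fun k => Gk d A i k z + ((if Nat.eqb k i then Tk d A i z else 0%C)
        + Complex.RtoC (if Nat.ltb i k then sg k * INR (Dd d k) else 0)))%C).
  - rewrite !CS_add, CS_delta by lia. rewrite CS_real.
    rewrite <- (telescope d i (n - 1)) by lia.
    replace (S (n - 1)) with n by lia. rewrite RtoC_plus. ring.
  - intros k Hk. unfold Gk.
    destruct (Nat.ltb_spec k i); destruct (Nat.eqb_spec k i); destruct (Nat.ltb_spec i k); try lia.
    + ring.
    + subst. ring.
    + assert (Hz := Hnz k Hk ltac:(lia)). unfold Tk. field. auto.
Qed.

Lemma eps_props n d A i w (ka M : R) (E : nat) t t' :
  0 < Cmod w -> 0 <= ka <= /2 -> 1 <= M -> (1 <= n)%nat ->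
  (forall k, (1 <= k <= n - 1)%nat ->
     INR (Dd d k) <= M /\ (1 <= Dd d k <= E)%nat /\
     ((k < i)%nat -> (2 * Cmod w) ^ Dd d k <= ka * Cmod (A k ^ Dd d k)%C) /\
     ((i < k)%nat -> Cmod (A k ^ Dd d k)%C <= ka * (Cmod w / 2) ^ Dd d k)) ->
  INR (d 1%nat) <= M -> (2 <= d 1%nat <= E)%nat ->
  (2 * Cmod w) ^ d 1%nat * (INR (d 1%nat) - 1) <= ka ->
  Cmod t <= /2 -> Cmod t' <= /2 ->
  Cmod (epsC n d A i (zz w t)) <= INR n * (2 * M * M * 4 ^ E * ka) /\
  Cmod (epsC n d A i (zz w t) - epsC n d A i (zz w t'))%C
    <= INR n * (2 * M * M * 4 ^ E * ka) * Cmod (t - t')%C.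
Proof.
  intros Hw Hka HM Hn Hk HL1 HL2 HL3 Ht Ht'.
  destruct (Lt_props d w ka M E t t' Hw Hka HM HL1 HL2 HL3 Ht Ht') as [_ [L1 L2]].
  assert (Hn' : INR n = INR (n - 1) + 1) by (rewrite <- S_INR; f_equal; lia).
  unfold epsC. split.
  - eapply Rle_trans. apply Cmod_sub_le.
    assert (HS : Cmod (CS (fun k => Gk d A i k (zz w t)) (n - 1)) <= INR (n - 1) * (2 * M * M * 4 ^ E * ka)).
    { apply CS_bound. intros k Hk'. destruct (Hk k Hk') as [a1 [a2 [a3 a4]]].
      apply (Gk_props d A i k w ka M E t t'); auto. }
    rewrite Hn'. lra.
  - replace (CS (fun k => Gk d A i k (zz w t)) (n - 1) - Lt d (zz w t) -
       (CS (fun k => Gk d A i k (zz w t')) (n - 1) - Lt d (zz w t')))%C with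
      ((CS (fun k => Gk d A i k (zz w t)) (n - 1) - CS (fun k => Gk d A i k (zz w t')) (n - 1))
       - (Lt d (zz w t) - Lt d (zz w t')))%C by ring.
    eapply Rle_trans. apply Cmod_sub_le. rewrite CS_sub.
    assert (HS : Cmod (CS (fun k => Gk d A i k (zz w t) - Gk d A i k (zz w t'))%C (n - 1))
       <= INR (n - 1) * (2 * M * M * 4 ^ E * ka * Cmod (t - t')%C)).
    { apply CS_bound. intros k Hk'. destruct (Hk k Hk') as [a1 [a2 [a3 a4]]].
      apply (Gk_props d A i k w ka M E t t'); auto. }
    rewrite Hn'. lra.
Qed.

Lemma alg_core (eps u aD zD cC sC dI dJ : Complex.C) :
  (sC * sC = 1)%C -> (cC * dI = dJ)%C -> dJ <> 0%C -> aD <> 0%C -> (cC * u + 1)%C <> 0%C ->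
  zD = (- (cC * aD * u))%C -> u = (1 + - (sC * eps * (cC * u + 1) / dJ))%C ->
  (eps + sC * (dI + dJ) * zD / (zD - aD) + - sC * dJ)%C = 0%C.
Proof.
  intros Hs Hc HdJ HaD Hcu Hz Hu.
  assert (Heps : eps = (- (sC * (u - 1) * dJ / (cC * u + 1)))%C).
  { rewrite Hu at 1. transitivity (sC * sC * eps)%C. rewrite Hs. ring. field; auto. }
  assert (HzD : (zD - aD)%C = (- (aD * (cC * u + 1)))%C) by (rewrite Hz; ring).
  rewrite HzD, Heps, Hz. rewrite <- Hc.
  field. split; auto.
Qed.

Lemma sg_sq i : sg i * sg i = 1.
Proof. unfold sg. rewrite <- pow_add. replace (i - 1 + (i - 1))%nat with (2 * (i - 1))%nat by lia.
  rewrite pow_mult. replace ((-1)^2) with 1 by ring. apply pow1. Qed.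

Lemma sg_S i : (1 <= i)%nat -> sg (S i) = - sg i.
Proof. intros H. unfold sg. replace (S i - 1)%nat with (S (i - 1)) by lia. simpl. ring. Qed.

Lemma Cmod_RtoC_sg i : Cmod (Complex.RtoC (sg i)) = 1.
Proof. rewrite Cmod_R. unfold sg. apply pow_1_abs. Qed.

Lemma core n d (A : nat -> Complex.C) i (zeta : Complex.C) (rho c ka M G : R) (E : nat) :
  (1 <= i <= n - 1)%nat -> (2 <= n)%nat ->
  (zeta ^ Dd d i = - 1)%C -> Cmod zeta = 1 -> 0 < rho -> rho ^ Dd d i = c ->
  0 < c <= M -> c * INR (d i) = INR (d (S i)) -> (1 <= d (S i))%nat ->
  A i <> 0%C ->
  0 <= ka <= /2 -> 1 <= M -> INR (Dd d i) <= M -> (1 <= Dd d i)%nat ->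
  (forall k, (1 <= k <= n - 1)%nat ->
     INR (Dd d k) <= M /\ (1 <= Dd d k <= E)%nat /\
     ((k < i)%nat -> (2 * Cmod (rho * (A i * zeta))%C) ^ Dd d k <= ka * Cmod (A k ^ Dd d k)%C) /\
     ((i < k)%nat -> Cmod (A k ^ Dd d k)%C <= ka * (Cmod (rho * (A i * zeta))%C / 2) ^ Dd d k)) ->
  INR (d 1%nat) <= M -> (2 <= d 1%nat <= E)%nat ->
  (2 * Cmod (rho * (A i * zeta))%C) ^ d 1%nat * (INR (d 1%nat) - 1) <= ka ->
  5 * M * M * (INR n * (2 * M * M * 4 ^ E * ka)) <= G -> 2 * M * G <= /24 ->
  exists t, Cmod t <= 2 * G /\
    critC n d A (zz (rho * (A i * zeta)) t) = 0%C /\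
    zz (rho * (A i * zeta)) t <> 0%C /\
    (forall k, (1 <= k <= n - 1)%nat ->
       (zz (rho * (A i * zeta)) t ^ Dd d k - A k ^ Dd d k)%C <> 0%C) /\
    (Complex.RtoC (INR (d 1%nat) - 1) * zz (rho * (A i * zeta)) t ^ d 1%nat + 1)%C <> 0%C.
Proof.
  intros Hi Hn Hz Hz1 Hrho Hrc Hc Hcd HdS HA Hka HM HDM HD1 Hk HL1 HL2 HL3 HG1 HG2.
  set (w := (rho * (A i * zeta))%C) in *.
  assert (Hw : Cmod w = rho * Cmod (A i)).
  { unfold w. rewrite !Cmod_mult, Hz1, Cmod_R. rewrite Rabs_pos_eq by lra. ring. }
  assert (HwP : 0 < Cmod w) by (rewrite Hw; apply Rmult_lt_0_compat; [auto|apply (proj1 (Cmod_gt_0 _)); auto]).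
  set (D := Dd d i) in *.
  set (lam := 2 * M * M * 4 ^ E * ka) in *.
  assert (H4 : 1 <= 4 ^ E) by (apply pow_R1_Rle; lra).
  assert (Hlam : 0 <= lam) by (unfold lam; assert (0 <= M * M * 4 ^ E) by (apply Rmult_le_pos; nra); nra).
  assert (Hn1 : 2 <= INR n) by (apply (le_INR 2); lia).
  assert (HnL : 0 <= INR n * lam) by nra.
  assert (HG0 : 0 <= G) by nra.
  assert (HG48 : G <= /48) by nra.
  set (r := 2 * G).
  assert (Hr2 : r <= /2) by (unfold r; lra).
  assert (HDr : INR D * r <= /24).
  { unfold r. assert (INR D * (2 * G) <= M * (2 * G)) by (apply Rmult_le_compat_r; lra). lra. }
  assert (HD1R : 1 <= INR D) by (apply (le_INR 1); auto).
  assert (HB : (1 + r) ^ D <= 2) by (apply Bpow2; unfold r; nra).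
  assert (HepsP := fun t t' H H' => eps_props n d A i w ka M E t t' HwP Hka HM ltac:(lia) Hk HL1 HL2 HL3 H H').
  set (dJ := INR (d (S i))).
  assert (HdJ : 1 <= dJ) by (apply (le_INR 1); auto).
  assert (HdJnz : Complex.RtoC dJ <> 0%C) by (intros E0; apply (f_equal fst) in E0; simpl in E0; lra).
  set (Kc := (- (Complex.RtoC (sg i) / Complex.RtoC dJ))%C).
  assert (HKc : Cmod Kc <= 1).
  { unfold Kc. rewrite Cmod_opp, Cmod_div, Cmod_RtoC_sg, Cmod_R, Rabs_pos_eq by (auto; lra).
    apply Rmult_le_reg_r with dJ; [lra|]. unfold Rdiv. rewrite Rmult_1_l, Rinv_l by lra. lra. }
  set (u := fun t : Complex.C => ((1 + t) ^ D)%C).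
  assert (Hu : forall t, Cmod t <= r -> Cmod (u t) <= 2).
  { intros t Ht. unfold u. rewrite Cmod_pow. eapply Rle_trans; [|apply HB].
    apply pow_incr. split. apply Cmod_ge_0. apply Cmod_1t; auto. }
  assert (Hul : forall t t', Cmod t <= r -> Cmod t' <= r -> Cmod (u t - u t')%C <= 2 * M * Cmod (t - t')%C).
  { intros t t' Ht Ht'. unfold u. remember D as D'. destruct D' as [|m]; [lia|].
    eapply Rle_trans. apply (pow_diff m (1 + t)%C (1 + t')%C (1 + r)); apply Cmod_1t; auto.
    replace (1 + t - (1 + t'))%C with (t - t')%C by ring.
    assert ((1 + r) ^ m <= 2).
    { eapply Rle_trans; [|apply HB]. apply Rle_pow. unfold r; lra. lia. }
    assert (0 <= (1 + r) ^ m) by (apply pow_le; unfold r; lra).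
    assert (0 <= Cmod (t - t')%C) by apply Cmod_ge_0.
    assert (INR (S m) * (1 + r) ^ m <= M * 2) by (apply Rmult_le_compat; auto using pos_INR).
    nra. }
  set (e := fun t => (Kc * (epsC n d A i (zz w t) * (Complex.RtoC c * u t + 1)))%C).
  assert (Hcu : forall t, Cmod t <= r -> Cmod (Complex.RtoC c * u t + 1)%C <= 3 * M).
  { intros t Ht. eapply Rle_trans. apply Cmod_triangle. rewrite Cmod_mult, Cmod_1, Cmod_R, Rabs_pos_eq by lra.
    assert (c * Cmod (u t) <= M * 2) by (apply Rmult_le_compat; auto using Cmod_ge_0; lra). lra. }
  assert (HeB : forall t, Cmod t <= r -> Cmod (e t) <= G).
  { intros t Ht. unfold e. rewrite !Cmod_mult.
    destruct (HepsP t t ltac:(lra) ltac:(lra)) as [E1 _].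
    assert (H1 := Hcu t Ht).
    assert (Cmod (epsC n d A i (zz w t)) * Cmod (Complex.RtoC c * u t + 1)%C <= (INR n * lam) * (3 * M))
      by (apply Rmult_le_compat; auto using Cmod_ge_0).
    assert (Cmod Kc * (Cmod (epsC n d A i (zz w t)) * Cmod (Complex.RtoC c * u t + 1)%C) <= 1 * ((INR n * lam) * (3 * M)))
      by (apply Rmult_le_compat; auto using Cmod_ge_0; apply Rmult_le_pos; apply Cmod_ge_0).
    assert (INR n * lam * (3 * M) <= G).
    { assert (0 <= INR n * lam * M * (5 * M - 3)) by (apply Rmult_le_pos; nra). nra. }
    nra. }
  destruct (perturbed_root D r e HD1 ltac:(unfold r; lra) HDr) as [t [Ht Hfix]].
  - intros t Ht. assert (H := HeB t Ht). unfold r. nra.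
  - intros t t' Ht Ht'. unfold e.
    set (e1 := epsC n d A i (zz w t)). set (e2 := epsC n d A i (zz w t')).
    replace (Kc * (e1 * (Complex.RtoC c * u t + 1)) - Kc * (e2 * (Complex.RtoC c * u t' + 1)))%C with
      (Kc * ((e1 - e2) * (Complex.RtoC c * u t + 1) + e2 * Complex.RtoC c * (u t - u t')))%C by ring.
    rewrite Cmod_mult.
    destruct (HepsP t t' ltac:(lra) ltac:(lra)) as [_ L1].
    destruct (HepsP t' t' ltac:(lra) ltac:(lra)) as [B2 _].
    fold e1 e2 in L1, B2.
    set (dd := Cmod (t - t')%C) in *. assert (Hdd : 0 <= dd) by apply Cmod_ge_0.
    assert (X1 : Cmod ((e1 - e2) * (Complex.RtoC c * u t + 1))%C <= (INR n * lam * dd) * (3 * M)).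
    { rewrite Cmod_mult. apply Rmult_le_compat; auto using Cmod_ge_0. }
    assert (X2 : Cmod (e2 * Complex.RtoC c * (u t - u t'))%C <= (INR n * lam) * M * (2 * M * dd)).
    { rewrite !Cmod_mult, Cmod_R, Rabs_pos_eq by lra.
      apply Rmult_le_compat; auto using Cmod_ge_0. apply Rmult_le_pos; [apply Cmod_ge_0|lra].
      apply Rmult_le_compat; auto using Cmod_ge_0; lra. }
    assert (X3 := Cmod_triangle ((e1 - e2) * (Complex.RtoC c * u t + 1))%C (e2 * Complex.RtoC c * (u t - u t'))%C).
    assert (X4 : INR n * lam * dd * (3 * M) + INR n * lam * M * (2 * M * dd) <= G * dd).
    { assert (0 <= INR n * lam * dd * M * (3 * M - 3)) by (repeat apply Rmult_le_pos; nra). nra. }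
    assert (X5 : G * dd <= INR D / 4 * dd) by (apply Rmult_le_compat_r; lra).
    assert (0 <= Cmod ((e1 - e2) * (Complex.RtoC c * u t + 1) + e2 * Complex.RtoC c * (u t - u t'))%C) by apply Cmod_ge_0.
    assert (Cmod Kc * Cmod ((e1 - e2) * (Complex.RtoC c * u t + 1) + e2 * Complex.RtoC c * (u t - u t'))%C
      <= 1 * Cmod ((e1 - e2) * (Complex.RtoC c * u t + 1) + e2 * Complex.RtoC c * (u t - u t'))%C)
      by (apply Rmult_le_compat_r; auto).
    lra.
  - exists t. fold r. split; auto.
    set (z := zz w t).
    assert (Het := HeB t Ht).
    assert (Hcunz : (Complex.RtoC c * u t + 1)%C <> 0%C).
    { intros E0. assert (Hx := Cmod_sub_ge (Complex.RtoC (c + 1)) (- (Complex.RtoC c * e t))%C).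
      replace (Complex.RtoC (c + 1) - - (Complex.RtoC c * e t))%C with (Complex.RtoC c * u t + 1)%C in Hx
        by (unfold u; rewrite Hfix, RtoC_plus; ring).
      rewrite E0, Cmod_0, Cmod_opp, Cmod_mult, !Cmod_R, !Rabs_pos_eq in Hx by lra.
      assert (c * Cmod (e t) <= c * /48) by (apply Rmult_le_compat_l; lra). lra. }
    assert (HzD : (z ^ D)%C = (- (Complex.RtoC c * A i ^ D * u t))%C).
    { unfold z, zz, w, u. rewrite !Cpow_mult_l, <- RtoC_pow, Hrc, Hz. ring. }
    assert (HaD : (A i ^ D)%C <> 0%C) by (apply Cpow_nz; auto).
    assert (Hnz : forall k, (1 <= k <= n - 1)%nat -> (z ^ Dd d k - A k ^ Dd d k)%C <> 0%C).
    { intros k Hk'. destruct (Nat.eq_dec k i) as [->|Hki].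
      - fold D. rewrite HzD. intros E0.
        replace (- (Complex.RtoC c * A i ^ D * u t) - A i ^ D)%C with (- (A i ^ D * (Complex.RtoC c * u t + 1)))%C in E0 by ring.
        apply (Cmult_neq_0 _ _ HaD Hcunz). 
        replace (A i ^ D * (Complex.RtoC c * u t + 1))%C with (- - (A i ^ D * (Complex.RtoC c * u t + 1)))%C by ring.
        rewrite E0. ring.
      - destruct (Hk k Hk') as [a1 [a2 [a3 a4]]].
        refine (proj1 (Gk_props d A i k w ka M E t t HwP Hka HM a1 a2 a3 a4 _ _) Hki); lra. }
    destruct (Lt_props d w ka M E t t HwP Hka HM HL1 HL2 HL3 ltac:(lra) ltac:(lra)) as [HLnz _].
    split; [|split; [|split]]; auto.
    + rewrite (crit_decomp n d A i z Hi ltac:(intros; apply Hnz; auto)).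
      unfold Tk. fold D.
      rewrite sg_S by lia. fold dJ.
      assert (HDe : INR D = INR (d i) + dJ) by (unfold D, Dd, dJ; apply plus_INR).
      rewrite HDe, RtoC_mult, RtoC_plus, RtoC_mult, RtoC_opp.
      apply (alg_core _ (u t) (A i ^ D)%C (z ^ D)%C (Complex.RtoC c) (Complex.RtoC (sg i))
               (Complex.RtoC (INR (d i))) (Complex.RtoC dJ)); auto.
      * rewrite <- RtoC_mult, sg_sq. reflexivity.
      * rewrite <- RtoC_mult, Hcd. reflexivity.
      * unfold u. rewrite Hfix at 1. unfold e, Kc. fold z. fold (u t). field. auto.
    + unfold z. intros E0. destruct (zz_bounds w t ltac:(lra)) as [Z1 _].
      rewrite E0, Cmod_0 in Z1. lra.
Qed.

Lemma pb x q y z M s D E : 0 <= x <= q * y -> 0 <= q -> q ^ D <= s -> 0 <= y <= M * z ->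
  1 <= M -> (D <= E)%nat -> 0 <= z ->
  x ^ D <= M ^ E * s * z ^ D.
Proof.
  intros Hx Hq Hqs Hy HM HDE Hz.
  assert (H1 : x ^ D <= (q * y) ^ D) by (apply pow_incr; lra).
  rewrite Rpow_mult_distr in H1.
  assert (H2 : y ^ D <= (M * z) ^ D) by (apply pow_incr; lra).
  rewrite Rpow_mult_distr in H2.
  assert (H3 : M ^ D <= M ^ E) by (apply Rle_pow; auto).
  assert (0 <= q ^ D) by (apply pow_le; auto).
  assert (0 <= y ^ D) by (apply pow_le; lra).
  assert (0 <= z ^ D) by (apply pow_le; lra).
  assert (0 <= M ^ D) by (apply pow_le; lra).
  assert (0 <= s) by lra.
  assert (q ^ D * y ^ D <= s * (M ^ D * z ^ D)) by (apply Rmult_le_compat; lra).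
  assert (s * (M ^ D * z ^ D) <= s * (M ^ E * z ^ D)).
  { apply Rmult_le_compat_l; auto. apply Rmult_le_compat_r; auto. }
  lra.
Qed.

Lemma norms_chain (N p : nat -> R) n :
  (forall k, (2 <= k <= n - 1)%nat -> N k = p k * N (k - 1)%nat) ->
  (forall k, (2 <= k <= n - 1)%nat -> 0 < p k <= 1) -> 0 < N 1%nat ->
  forall l k, (1 <= k <= l)%nat -> (l <= n - 1)%nat -> 0 < N l /\ N l <= N k.
Proof.
  intros Hrec Hp HN1 l. induction l; intros k Hk Hl. lia.
  destruct (Nat.eq_dec k (S l)) as [->|Hne].
  - destruct l. split; lra.
    destruct (IHl 1%nat ltac:(lia) ltac:(lia)) as [Hpos _].
    rewrite Hrec by lia. replace (S (S l) - 1)%nat with (S l) by lia.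
    specialize (Hp (S (S l)) ltac:(lia)). split; [nra|lra].
  - destruct (IHl k ltac:(lia) ltac:(lia)) as [Hpos Hle].
    rewrite Hrec by lia. replace (S l - 1)%nat with l by lia.
    specialize (Hp (S l) ltac:(lia)). split; nra.
Qed.

Lemma Rsum1_ge (f : nat -> R) N k : (forall m, (1 <= m <= N)%nat -> 0 <= f m) -> (1 <= k <= N)%nat ->
  f k <= Rsum1 f N.
Proof.
  induction N; intros H Hk. lia. simpl.
  destruct (Nat.eq_dec k (S N)) as [->|Hne].
  - assert (0 <= Rsum1 f N).
    { clear Hk IHN. induction N; simpl. lra. assert (0 <= f (S N)) by (apply H; lia).
      assert (0 <= Rsum1 f N) by (apply IHN; intros; apply H; lia). lra. }
    lra.
  - assert (f k <= Rsum1 f N) by (apply IHN; [intros; apply H|]; lia).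
    assert (0 <= f (S N)) by (apply H; lia). lra.
Qed.

Lemma nmax1_ge d N k : (1 <= k <= N)%nat -> (d k <= nmax1 d N)%nat.
Proof.
  induction N; intros Hk. lia. simpl.
  destruct (Nat.eq_dec k (S N)) as [->|Hne]. lia.
  specialize (IHN ltac:(lia)). lia.
Qed.

Lemma expi_pow th m : ((cos th, sin th) ^ m)%C = (cos (INR m * th), sin (INR m * th)).
Proof.
  induction m.
  - simpl. rewrite Rmult_0_l, cos_0, sin_0. reflexivity.
  - rewrite Cpow_S, IHm. rewrite S_INR.
    replace ((INR m + 1) * th) with (th + INR m * th) by ring.
    rewrite cos_plus, sin_plus. unfold Cmult. simpl. f_equal; ring.
Qed.

Lemma expi_D (j D : nat) : (1 <= j)%nat -> (1 <= D)%nat ->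
  ((cos (PI * (2 * INR j - 1) / INR D), sin (PI * (2 * INR j - 1) / INR D)) ^ D)%C = (- 1)%C.
Proof.
  intros Hj HD. rewrite expi_pow.
  assert (HD' : INR D <> 0) by (apply not_0_INR; lia).
  replace (INR D * (PI * (2 * INR j - 1) / INR D)) with (PI + 2 * INR (j - 1) * PI).
  - rewrite cos_period, sin_period, cos_PI, sin_PI.
    unfold Complex.Copp, Complex.RtoC. simpl. f_equal; ring.
  - rewrite minus_INR by lia. simpl. field. auto.
Qed.

Lemma expi_mod th : Cmod (cos th, sin th) = 1.
Proof.
  unfold Cmod. simpl. replace 1 with (sqrt 1) at 3 by apply sqrt_1. f_equal.
  assert (H := sin2_cos2 th). unfold Rsqr in H. lra.
Qed.

Lemma crit_toC n d a z :
  toC (crit_lhs n d a z) = critC n d (fun k => toC (a k)) (toC z).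
Proof.
  unfold crit_lhs, critC, Lt.
  rewrite toC_sub, toC_add, toC_sum, toC_div, toC_mul, toC_add, toC_mul, !toC_RtoC, toC_pow, toC_C1.
  f_equal. f_equal. apply CS_ext. intros k Hk.
  unfold Tk, sg. rewrite toC_div, toC_mul, toC_RtoC, toC_sub, !toC_pow. reflexivity.
Qed.

Theorem lemma2p8 (n : nat) (d : nat -> nat)
  (Hn : (2 <= n)%nat)
  (Hd : forall i, (1 <= i <= n)%nat -> (1 <= d i)%nat)
  (Hsum : Rsum1 (fun i => / INR (d i)) n < 1) :
  exists s0 : R, 0 < s0 /\
  forall (s : R) (a : nat -> Cx),
    0 < s -> s < s0 ->
    Cnorm (a 1%nat) = Rpower (INR (nmax1 d n) ^ 2 * s) (/ INR (d 1%nat)) ->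
    (forall i, (2 <= i <= n - 1)%nat ->
       Cnorm (a i) = Rpower s (/ INR (d i)) * Cnorm (a (i - 1)%nat)) ->
    forall i j : nat, (1 <= i <= n - 1)%nat -> (1 <= j <= Dd d i)%nat ->
    exists w : Cx,
      is_crit_point n d a w /\
      Cnorm (Csub w
        (Cmul (RtoC (Rpower (INR (d (S i)) / INR (d i)) (/ INR (Dd d i))))
          (Cmul (a i) (Cexpi (PI * (2 * INR j - 1) / INR (Dd d i))))))
      < sqrt s * Cnorm (a i).
Proof.
  set (dm := nmax1 d n).
  assert (Hdle : forall k, (1 <= k <= n)%nat -> (d k <= dm)%nat) by (intros; apply nmax1_ge; auto).
  assert (Hd2 : forall k, (1 <= k <= n)%nat -> (2 <= d k)%nat).
  { intros k Hk.
    assert (Hpos : forall m, (1 <= m <= n)%nat -> 0 <= / INR (d m)).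
    { intros m Hm. left. apply Rinv_0_lt_compat. apply lt_0_INR. specialize (Hd m Hm). lia. }
    assert (H := Rsum1_ge (fun i => / INR (d i)) n k Hpos Hk). simpl in H.
    destruct (Nat.le_gt_cases 2 (d k)) as [H2|H2]; auto.
    assert (H1 : d k = 1%nat) by (specialize (Hd k Hk); lia).
    rewrite H1 in H. simpl in H. rewrite Rinv_1 in H. lra. }
  assert (Hdm2 : (2 <= dm)%nat) by (specialize (Hd2 1%nat ltac:(lia)); specialize (Hdle 1%nat ltac:(lia)); lia).
  assert (Hdm : 2 <= INR dm) by (apply (le_INR 2); auto).
  set (E := (2 * dm)%nat). set (M := INR E).
  assert (HME : M = 2 * INR dm) by (unfold M, E; rewrite mult_INR; reflexivity).
  assert (HM4 : 4 <= M) by lra.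
  set (K := M ^ (E + 3)).
  assert (HK1 : 1 <= K) by (apply pow_R1_Rle; lra).
  assert (H4E : 1 <= 4 ^ E) by (apply pow_R1_Rle; lra).
  assert (HM44 : 1 <= M ^ 4) by (apply pow_R1_Rle; lra).
  assert (Hn2 : 2 <= INR n) by (apply (le_INR 2); auto).
  set (Ctot := 10 * INR n * M ^ 4 * 4 ^ E * K).
  assert (HCK : K <= Ctot).
  { unfold Ctot. assert (1 <= 10 * INR n * M ^ 4 * 4 ^ E).
    { assert (1 <= M ^ 4 * 4 ^ E) by nra. assert (1 <= 10 * INR n) by lra. nra. }
    nra. }
  assert (HC1 : 1 <= Ctot) by lra.
  set (X := 48 * M * Ctot).
  assert (HX : 48 <= X) by (unfold X; nra).
  exists (/ X ^ 2). split.
  { apply Rinv_0_lt_compat. apply pow_lt. lra. }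
  intros s a Hs Hs0 Ha1 Hai i j Hi Hj.
  assert (HX2 : X <= X ^ 2) by (simpl; nra).
  assert (HsX : s * X ^ 2 < 1).
  { apply Rmult_lt_compat_r with (r := X ^ 2) in Hs0; [|apply pow_lt; lra].
    rewrite Rinv_l in Hs0 by (apply pow_nonzero; lra). lra. }
  assert (Hs1 : s < 1) by nra.
  assert (Hsq : sqrt s < / X).
  { replace (/ X) with (sqrt (/ X ^ 2)).
    apply sqrt_lt_1_alt. lra.
    rewrite sqrt_inv, sqrt_pow2 by lra. reflexivity. }
  assert (Hsq0 : 0 < sqrt s) by (apply sqrt_lt_R0; auto).
  assert (Hss : sqrt s * sqrt s = s) by (apply sqrt_sqrt; lra).
  set (A := fun k => toC (a k)).
  set (N := fun k => Cmod (A k)).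
  set (p := fun k => Rpower s (/ INR (d k))).
  assert (Hp : forall k, (1 <= k <= n)%nat -> 0 < p k <= 1).
  { intros k Hk. split. apply Rpower_pos. apply Rpower_le1. lra. left. apply Rinv_0_lt_compat.
    apply lt_0_INR. specialize (Hd k Hk). lia. }
  assert (HN1 : N 1%nat = Rpower (INR dm ^ 2 * s) (/ INR (d 1%nat))).
  { unfold N, A. rewrite <- Cnorm_toC. exact Ha1. }
  assert (HN1p : 0 < N 1%nat) by (rewrite HN1; apply Rpower_pos).
  assert (Hrec : forall k, (2 <= k <= n - 1)%nat -> N k = p k * N (k - 1)%nat).
  { intros k Hk. unfold N, A, p. rewrite <- !Cnorm_toC. apply Hai; auto. }
  assert (Hchain := norms_chain N p n Hrec ltac:(intros; apply Hp; lia) HN1p).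
  set (D := Dd d i).
  assert (Hdi := Hd2 i ltac:(lia)). assert (HdSi := Hd2 (S i) ltac:(lia)).
  assert (Hdi' := Hdle i ltac:(lia)). assert (HdSi' := Hdle (S i) ltac:(lia)).
  assert (Hdi2 : 2 <= INR (d i)) by (apply (le_INR 2); auto).
  assert (HdSi2 : 2 <= INR (d (S i))) by (apply (le_INR 2); auto).
  assert (Hdi3 : INR (d i) <= INR dm) by (apply le_INR; auto).
  assert (HdSi3 : INR (d (S i)) <= INR dm) by (apply le_INR; auto).
  set (c := INR (d (S i)) / INR (d i)).
  assert (Hcb : / INR dm <= c <= INR dm).
  { unfold c. split.
    - apply Rmult_le_reg_r with (INR dm * INR (d i)). nra.
      unfold Rdiv. field_simplify; try lra. nra.
    - apply Rmult_le_reg_r with (INR (d i)). lra.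
      unfold Rdiv. rewrite Rmult_assoc, Rinv_l by lra. nra. }
  assert (HD1 : (1 <= D)%nat) by (unfold D, Dd; lia).
  assert (HDR : 1 <= INR D) by (apply (le_INR 1); auto).
  set (rho := Rpower c (/ INR D)).
  assert (Hrho : / INR dm <= rho <= INR dm).
  { apply rho_bounds; try lra. split. apply Rinv_0_lt_compat; lra.
    rewrite <- Rinv_1. apply Rinv_le_contravar; lra. }
  assert (Hdminv : 0 < / INR dm) by (apply Rinv_0_lt_compat; lra).
  assert (Hc0 : 0 < c) by lra.
  set (th := PI * (2 * INR j - 1) / INR D).
  set (zeta := (cos th, sin th) : Complex.C).
  assert (HNi := proj1 (Hchain i i ltac:(lia) ltac:(lia))).
  set (W := Cmod (rho * (A i * zeta))%C).
  assert (HW : W = rho * N i).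
  { unfold W, N, zeta. rewrite !Cmod_mult, expi_mod, Cmod_R, Rabs_pos_eq by lra. ring. }
  assert (HW1 : 2 * W <= M * N i) by (rewrite HW, HME; nra).
  assert (HW2 : N i <= M * (W / 2)).
  { rewrite HW, HME. assert (H := Rmult_le_compat_r (N i) _ _ (ltac:(lra) : 0 <= N i) (proj1 Hrho)).
    assert (INR dm * (/ INR dm * N i) = N i) by (field; lra). nra. }
  assert (HKs : 0 <= K * s <= / 2).
  { split. nra. assert (K * s <= Ctot * s) by nra.
    assert (Ctot * 48 <= X) by (unfold X; nra).
    assert (s * X <= s * X ^ 2) by (apply Rmult_le_compat_l; lra).
    assert (Ctot * s * 48 <= s * X) by nra. lra. }
  assert (HMK : M ^ E <= K) by (unfold K; apply Rle_pow; lia || lra).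
  assert (Hper : forall k, (1 <= k <= n - 1)%nat ->
     INR (Dd d k) <= M /\ (1 <= Dd d k <= E)%nat /\
     ((k < i)%nat -> (2 * W) ^ Dd d k <= K * s * Cmod (A k ^ Dd d k)%C) /\
     ((i < k)%nat -> Cmod (A k ^ Dd d k)%C <= K * s * (W / 2) ^ Dd d k)).
  { intros k Hk.
    assert (Hdk := Hd2 k ltac:(lia)). assert (HdSk := Hd2 (S k) ltac:(lia)).
    assert (Hdk' := Hdle k ltac:(lia)). assert (HdSk' := Hdle (S k) ltac:(lia)).
    assert (HDE : (Dd d k <= E)%nat) by (unfold Dd, E; lia).
    split; [|split; [|split]].
    - unfold M. apply le_INR. auto.
    - unfold Dd. lia.
    - intros Hki. rewrite Cmod_pow. fold (N k).
      assert (HNk := proj1 (Hchain k k ltac:(lia) ltac:(lia))).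
      assert (H1 : N i <= N (S k)) by (apply (Hchain i (S k)); lia).
      rewrite (Hrec (S k)) in H1 by lia. replace (S k - 1)%nat with k in H1 by lia.
      assert (Hpk := Hp (S k) ltac:(lia)).
      assert (H2 := pb (2 * W) (p (S k)) (M * N k) (N k) M s (Dd d k) E).
      assert (H3 : (2 * W) ^ Dd d k <= M ^ E * s * N k ^ Dd d k).
      { apply H2.
        - split. rewrite HW; nra. assert (M * N i <= M * (p (S k) * N k)) by (apply Rmult_le_compat_l; lra).
          assert (M * (p (S k) * N k) = p (S k) * (M * N k)) by ring. lra.
        - lra.
        - apply Rpower_inv_pow_le; try lra; unfold Dd; lia.
        - split; nra.
        - lra.
        - exact HDE.
        - lra. }
      assert (0 <= s * N k ^ Dd d k) by (apply Rmult_le_pos; [lra|apply pow_le; lra]).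
      assert (M ^ E * (s * N k ^ Dd d k) <= K * (s * N k ^ Dd d k)) by (apply Rmult_le_compat_r; auto).
      lra.
    - intros Hik. rewrite Cmod_pow. fold (N k).
      assert (HNk := proj1 (Hchain k k ltac:(lia) ltac:(lia))).
      assert (H1 : N (k - 1)%nat <= N i) by (apply (Hchain (k - 1)%nat i); lia).
      assert (H0 := Hrec k ltac:(lia)).
      assert (Hpk := Hp k ltac:(lia)).
      assert (H2 := pb (N k) (p k) (N i) (W / 2) M s (Dd d k) E).
      assert (H3 : N k ^ Dd d k <= M ^ E * s * (W / 2) ^ Dd d k).
      { apply H2.
        - split. lra. rewrite H0. apply Rmult_le_compat_l; lra.
        - lra.
        - apply Rpower_inv_pow_le; try lra; unfold Dd; lia.
        - split; lra.
        - lra.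
        - exact HDE.
        - rewrite HW; nra. }
      assert (0 <= (W / 2) ^ Dd d k) by (apply pow_le; rewrite HW; nra).
      assert (0 <= s * (W / 2) ^ Dd d k) by (apply Rmult_le_pos; lra).
      assert (M ^ E * (s * (W / 2) ^ Dd d k) <= K * (s * (W / 2) ^ Dd d k)) by (apply Rmult_le_compat_r; auto).
      lra. }
  assert (Hd1 := Hd2 1%nat ltac:(lia)). assert (Hd1' := Hdle 1%nat ltac:(lia)).
  assert (Hd1R : INR (d 1%nat) <= INR dm) by (apply le_INR; auto).
  assert (Hd1R2 : 2 <= INR (d 1%nat)) by (apply (le_INR 2); auto).
  assert (HLt : (2 * W) ^ d 1%nat * (INR (d 1%nat) - 1) <= K * s).
  { assert (HN1i : N i <= N 1%nat) by (apply (Hchain i 1%nat); lia).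
    assert (P1 : (2 * W) ^ d 1%nat <= M ^ d 1%nat * (INR dm ^ 2 * s)).
    { eapply Rle_trans. apply pow_incr. split. rewrite HW; nra.
      assert (2 * W <= M * N 1%nat) by nra. exact H.
      rewrite Rpow_mult_distr, HN1, Rpower_inv_pow. lra. apply Rmult_lt_0_compat; [apply pow_lt; lra|lra]. lia. }
    assert (P2 : INR dm ^ 2 <= M ^ 2) by (apply pow_incr; lra).
    assert (P3 : M ^ (d 1%nat + 3) <= K) by (unfold K; apply Rle_pow; [lra|unfold E; lia]).
    rewrite pow_add in P3.
    assert (0 <= M ^ d 1%nat) by (apply pow_le; lra).
    assert (0 <= (2 * W) ^ d 1%nat) by (apply pow_le; rewrite HW; nra).
    assert (P4 : (2 * W) ^ d 1%nat * (INR (d 1%nat) - 1) <= M ^ d 1%nat * (INR dm ^ 2 * s) * M).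
    { apply Rmult_le_compat; auto; lra. }
    assert (P5 : M ^ d 1%nat * (INR dm ^ 2 * s) * M <= M ^ d 1%nat * (M ^ 2 * s) * M).
    { apply Rmult_le_compat_r. lra. apply Rmult_le_compat_l. auto. apply Rmult_le_compat_r; lra. }
    assert (P6 : M ^ d 1%nat * (M ^ 2 * s) * M = M ^ d 1%nat * M ^ 3 * s) by (simpl; ring).
    assert (P7 : M ^ d 1%nat * M ^ 3 * s <= K * s) by (apply Rmult_le_compat_r; lra).
    lra. }
  assert (HAi : A i <> 0%C).
  { intros E0. unfold N in HNi. rewrite E0, Cmod_0 in HNi. lra. }
  destruct (core n d A i zeta rho c (K * s) M (Ctot * s) E Hi Hn) as [t [Ht [Hcrit [Hz0 [Hnz HLnz]]]]].
  - apply expi_D; lia.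
  - apply expi_mod.
  - apply Rpower_pos.
  - apply Rpower_inv_pow; auto.
  - split; lra.
  - unfold c. field. lra.
  - lia.
  - auto.
  - auto.
  - lra.
  - fold D. unfold D, Dd. rewrite plus_INR. lra.
  - auto.
  - exact Hper.
  - lra.
  - unfold E; lia.
  - exact HLt.
  - unfold Ctot. right. ring.
  - assert (Ctot * 48 <= X) by (unfold X; nra).
    assert (2 * M * (Ctot * s) * 24 <= s * X ^ 2).
    { unfold X. simpl. assert (0 <= M * Ctot * s) by (repeat apply Rmult_le_pos; lra).
      assert (4 <= M * Ctot) by nra.
      assert (0 <= M * Ctot * s * (48 * 48 * M * Ctot - 48)) by (apply Rmult_le_pos; lra). nra. }
    lra.
  - set (z := zz (rho * (A i * zeta)) t) in *.
    exists (mkC (fst z) (snd z)).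
    assert (Hwz : toC (mkC (fst z) (snd z)) = z) by (change (toC (mkC (fst z) (snd z))) with (fst z, snd z); symmetry; apply surjective_pairing).
    split.
    + unfold is_crit_point. split; [|split; [|split]].
      * intros E0. apply Hz0. rewrite <- Hwz, E0. reflexivity.
      * intros k Hk E0. apply (Hnz k Hk). apply (f_equal toC) in E0.
        rewrite toC_sub, !toC_pow, Hwz in E0. exact E0.
      * intros E0. apply HLnz. apply (f_equal toC) in E0.
        rewrite toC_add, toC_mul, toC_pow, toC_RtoC, Hwz, toC_C1 in E0. exact E0.
      * apply toC_inj. rewrite crit_toC, Hwz. exact Hcrit.
    + rewrite !Cnorm_toC, toC_sub, toC_mul, toC_RtoC, toC_mul, toC_expi, Hwz.
      fold (A i). fold (N i).
      replace (z - rho * (A i * (cos th, sin th)))%C with (rho * (A i * zeta) * t)%C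
        by (unfold z, zz, zeta; ring).
      rewrite Cmod_mult. fold W. rewrite HW.
      assert (Hrt : rho * Cmod t <= M * (2 * (Ctot * s))).
      { apply Rmult_le_compat; try lra. apply Cmod_ge_0. }
      assert (Hfin : M * (2 * (Ctot * s)) < sqrt s).
      { assert (M * (2 * (Ctot * sqrt s)) < 1).
        { assert (M * Ctot * sqrt s < M * Ctot * / X).
          { apply Rmult_lt_compat_l. nra. auto. }
          assert (M * Ctot * / X = / 48) by (unfold X; field; nra). nra. }
        assert (Heq : M * (2 * (Ctot * s)) = (M * (2 * (Ctot * sqrt s))) * sqrt s).
        { transitivity (M * (2 * (Ctot * (sqrt s * sqrt s)))). rewrite Hss; reflexivity. ring. }
        rewrite Heq. nra. }
      assert (rho * N i * Cmod t = (rho * Cmod t) * N i) by ring.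
      nra.
Qed.
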